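(* Assume (affine MRDP) that for every affine $\Sigma_0$-formula $\phi(\bar x)$ there is an affine quantifier-free formula $\psi(\bar x,\bar y)$ such that every model of $\mathrm{AA}$ satisfies $\phi(\bar x)=\sup_{\bar y}\psi(\bar x,\bar y)$. Let $M\subseteq N$ be models of $\mathrm{AA}_0$ with $N$ a cofinal extension of $M$, and assume $M\models\mathrm{AA}$. Then the following are equivalent: (i) $M\preccurlyeq_{\Sigma_0}N$; (ii) $N\models\mathrm{AA}$; (iii) $M\preccurlyeq N$.
   Context: Structures are complete metric spaces of diameter at most $1$ in $L=\{+,\cdot,\wedge,\vee,0,1\}$ (operations $1$-Lipschitz, $d$ the only relation symbol); affine formulas are built from $1$ and $d(t_1,t_2)$ using $+$, real scalar multiples, $\sup$, $\inf$; quantifier-free affine formulas use only $1$, atomic formulas, $+$ and scalar multiples. $\mathrm{AA}$ is the set of all closed affine conditions true in every model of first-order Peano arithmetic (in $L$, with $\le$ given by $x\wedge y=x$, lattice operations min/max, discrete metric). $|x|=d(x,0)$; $x\le y$ means $x\wedge y=x$; $nx$, $x^n$ iterated sum/product. $\mathrm{AA}_0$ consists of (universally quantified): (A1) the identities of the nonnegative part of a lattice-ordered commutative ring with identity (commutative semiring axioms, lattice axioms, distributivity of $+,\cdot$ over $\wedge,\vee$, $0\le x$); (A2) $\inf_y d(x,(x\wedge y)+1)=1-|x|$ and $x\le x^2$; (A3) $d(x+z,y+z)=d(x,y)$; (A4) $d(y,z)\le d(xy,xz)+1-|x|$; (A5) $d(xy,xz)=d(x^ny,x^nz)\le d(y,z)$;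 (A6) $d(nx,ny)=d(x^n,y^n)=d(x,y)$, $n\ge1$; (A7) $|x\wedge y|+|x\vee y|=|x|+|y|$; (A8) $|xy+z|=|(x\wedge y)+z|$; (A9) $|x+y+z|=|(x\vee y)+z|$; (A10) $\inf_t d((x\wedge y)+t,y)=0$. Bounded quantifiers: $\sup_{x\le t}\phi(x):=\sup_x\phi(x\wedge t)$, $\inf_{x\le t}\phi(x):=\inf_x\phi(x\wedge t)$; $\Sigma_0$ formulas are affine formulas with only bounded quantifiers. $M\preccurlyeq_{\Sigma_0}N$ means $\phi^M(\bar a)=\phi^N(\bar a)$ for all $\Sigma_0$ formulas and $\bar a\in M$; $M\preccurlyeq N$ means this for all affine formulas. $N$ is a cofinal extension of $M$ if $M$ is a substructure of $N$ and each $x\in N$ satisfies $x\le y$ for some $y\in M$. *)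

(* Defs.v *)
From Stdlib Require Import Reals List.
From Coquelicot Require Import Coquelicot.
Open Scope R_scope.

(* real supremum / infimum of a set of reals (the actual sup/inf when the set
   is nonempty and bounded, which is always the case below) *)
Definition Rsup (S : R -> Prop) : R := real (Lub_Rbar S).
Definition Rinf (S : R -> Prop) : R := real (Glb_Rbar S).

Record Lstruct := {
  car :> Type;
  dst : car -> car -> R;
  add : car -> car -> car;
  mul : car -> car -> car;
  mt  : car -> car -> car;
  jn  : car -> car -> car;
  zr  : car;
  on  : car;
  dst_refl : forall x, dst x x = 0;
  dst_sym : forall x y, dst x y = dst y x;
  dst_tri : forall x y z, dst x z <= dst x y + dst y z;
  dst_sep : forall x y, dst x y = 0 -> x = y;
  dst_ge0 : forall x y, 0 <= dst x y;
  dst_le1 : forall x y, dst x y <= 1;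
  dst_complete : forall u : nat -> car,
    (forall eps, 0 < eps -> exists N, forall n m, (N <= n)%nat -> (N <= m)%nat ->
        dst (u n) (u m) < eps) ->
    exists l, forall eps, 0 < eps -> exists N, forall n, (N <= n)%nat -> dst (u n) l < eps;
  add_lip : forall x y x' y', dst (add x y) (add x' y') <= Rmax (dst x x') (dst y y');
  mul_lip : forall x y x' y', dst (mul x y) (mul x' y') <= Rmax (dst x x') (dst y y');
  mt_lip : forall x y x' y', dst (mt x y) (mt x' y') <= Rmax (dst x x') (dst y y');
  jn_lip : forall x y x' y', dst (jn x y) (jn x' y') <= Rmax (dst x x') (dst y y')
}.

Arguments dst {_}. Arguments add {_}. Arguments mul {_}. Arguments mt {_}.
Arguments jn {_}. Arguments zr {_}. Arguments on {_}.

Inductive term :=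
| TVar (n : nat) | TZero | TOne
| TAdd (t1 t2 : term) | TMul (t1 t2 : term)
| TMeet (t1 t2 : term) | TJoin (t1 t2 : term).

Inductive formula :=
| FOne
| FDist (t1 t2 : term)
| FAdd (p q : formula)
| FScale (r : R) (p : formula)
| FSup (n : nat) (p : formula)
| FInf (n : nat) (p : formula).

Definition upd {M : Lstruct} (a : nat -> M) (n : nat) (x : M) : nat -> M :=
  fun m => if Nat.eqb m n then x else a m.

Fixpoint evalt (M : Lstruct) (a : nat -> M) (t : term) : M :=
  match t with
  | TVar n => a n
  | TZero => zr
  | TOne => on
  | TAdd t1 t2 => add (evalt M a t1) (evalt M a t2)
  | TMul t1 t2 => mul (evalt M a t1) (evalt M a t2)
  | TMeet t1 t2 => mt (evalt M a t1) (evalt M a t2)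
  | TJoin t1 t2 => jn (evalt M a t1) (evalt M a t2)
  end.

Fixpoint eval (M : Lstruct) (a : nat -> M) (p : formula) : R :=
  match p with
  | FOne => 1
  | FDist t1 t2 => dst (evalt M a t1) (evalt M a t2)
  | FAdd p q => eval M a p + eval M a q
  | FScale r p => r * eval M a p
  | FSup n p => Rsup (fun r => exists x : M, r = eval M (upd a n x) p)
  | FInf n p => Rinf (fun r => exists x : M, r = eval M (upd a n x) p)
  end.

Fixpoint var_in_term (n : nat) (t : term) : Prop :=
  match t with
  | TVar m => n = m
  | TZero | TOne => False
  | TAdd t1 t2 | TMul t1 t2 | TMeet t1 t2 | TJoin t1 t2 =>
      var_in_term n t1 \/ var_in_term n t2
  end.

Fixpoint free_in (n : nat) (p : formula) : Prop :=
  match p with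
  | FOne => False
  | FDist t1 t2 => var_in_term n t1 \/ var_in_term n t2
  | FAdd p q => free_in n p \/ free_in n q
  | FScale _ p => free_in n p
  | FSup m p | FInf m p => n <> m /\ free_in n p
  end.

Fixpoint bound_in (n : nat) (p : formula) : Prop :=
  match p with
  | FOne | FDist _ _ => False
  | FAdd p q => bound_in n p \/ bound_in n q
  | FScale _ p => bound_in n p
  | FSup m p | FInf m p => n = m \/ bound_in n p
  end.

Definition closed_formula (p : formula) : Prop := forall n, ~ free_in n p.

(* substitution of a term for (free occurrences of) a variable; it is used
   below only when no variable of s is bound in the formula (no capture) *)
Fixpoint tsubst (x : nat) (s : term) (t : term) : term :=
  match t with
  | TVar m => if Nat.eqb m x then s else TVar m
  | TZero => TZero | TOne => TOne
  | TAdd t1 t2 => TAdd (tsubst x s t1) (tsubst x s t2)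
  | TMul t1 t2 => TMul (tsubst x s t1) (tsubst x s t2)
  | TMeet t1 t2 => TMeet (tsubst x s t1) (tsubst x s t2)
  | TJoin t1 t2 => TJoin (tsubst x s t1) (tsubst x s t2)
  end.

Fixpoint fsubst (x : nat) (s : term) (p : formula) : formula :=
  match p with
  | FOne => FOne
  | FDist t1 t2 => FDist (tsubst x s t1) (tsubst x s t2)
  | FAdd p q => FAdd (fsubst x s p) (fsubst x s q)
  | FScale r p => FScale r (fsubst x s p)
  | FSup m p => if Nat.eqb m x then FSup m p else FSup m (fsubst x s p)
  | FInf m p => if Nat.eqb m x then FInf m p else FInf m (fsubst x s p)
  end.

(* bounded quantifiers: sup_{x <= t} p(x) := sup_x p(x /\ t)  (x not in t) *)
Definition BSup (x : nat) (t : term) (p : formula) : formula :=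
  FSup x (fsubst x (TMeet (TVar x) t) p).
Definition BInf (x : nat) (t : term) (p : formula) : formula :=
  FInf x (fsubst x (TMeet (TVar x) t) p).

Inductive Sigma0 : formula -> Prop :=
| S0_one : Sigma0 FOne
| S0_dist t1 t2 : Sigma0 (FDist t1 t2)
| S0_add p q : Sigma0 p -> Sigma0 q -> Sigma0 (FAdd p q)
| S0_scale r p : Sigma0 p -> Sigma0 (FScale r p)
| S0_bsup x t p : Sigma0 p -> ~ var_in_term x t ->
    (forall y, var_in_term y t -> ~ bound_in y p) -> Sigma0 (BSup x t p)
| S0_binf x t p : Sigma0 p -> ~ var_in_term x t ->
    (forall y, var_in_term y t -> ~ bound_in y p) -> Sigma0 (BInf x t p).

Fixpoint QF (p : formula) : Prop :=
  match p with
  | FOne | FDist _ _ => True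
  | FAdd p q => QF p /\ QF q
  | FScale _ p => QF p
  | FSup _ _ | FInf _ _ => False
  end.

Definition sups (ys : list nat) (p : formula) : formula := fold_right FSup p ys.

Record condition := Cond { lhs : formula; rhs : formula }.

Definition sat (M : Lstruct) (a : nat -> M) (c : condition) : Prop :=
  eval M a (lhs c) <= eval M a (rhs c).

Definition closed_condition (c : condition) : Prop :=
  closed_formula (lhs c) /\ closed_formula (rhs c).

Inductive foformula :=
| FOeq (t1 t2 : term)
| FOneg (p : foformula)
| FOand (p q : foformula)
| FOex (n : nat) (p : foformula).

Fixpoint holds (M : Lstruct) (a : nat -> M) (p : foformula) : Prop :=
  match p with
  | FOeq t1 t2 => evalt M a t1 = evalt M a t2
  | FOneg p => ~ holds M a p
  | FOand p q => holds M a p /\ holds M a q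
  | FOex n p => exists x : M, holds M (upd a n x) p
  end.

(* M is (the L-structure of) a model of first-order PA:
   discrete metric, x <= y iff exists z, x + z = y, meet/join = min/max,
   the basic axioms of PA (successor x+1) and induction for all first-order
   formulas (with parameters). *)
Definition PAmodel (M : Lstruct) : Prop :=
  (forall x y : M, x <> y -> dst x y = 1) /\
  (forall x y : M, (exists z, add x z = y) -> mt x y = x /\ jn x y = y) /\
  (forall x y : M, ~ (exists z, add x z = y) -> mt x y = y /\ jn x y = x) /\
  (forall x : M, add x on <> zr) /\
  (forall x y : M, add x on = add y on -> x = y) /\
  (forall x : M, add x zr = x) /\
  (forall x y : M, add x (add y on) = add (add x y) on) /\
  (forall x : M, mul x zr = zr) /\
  (forall x y : M, mul x (add y on) = add (mul x y) x) /\
  (forall (p : foformula) (n : nat) (a : nat -> M),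
      holds M (upd a n zr) p ->
      (forall x, holds M (upd a n x) p -> holds M (upd a n (add x on)) p) ->
      forall x, holds M (upd a n x) p).

Definition AA (c : condition) : Prop :=
  closed_condition c /\ forall (P : Lstruct) (a : nat -> P), PAmodel P -> sat P a c.

Definition models_AA (M : Lstruct) : Prop :=
  forall c, AA c -> forall a : nat -> M, sat M a c.

Definition le {M : Lstruct} (x y : M) : Prop := mt x y = x.
Definition absv {M : Lstruct} (x : M) : R := dst x zr.

Fixpoint nsum {M : Lstruct} (n : nat) (x : M) : M :=
  match n with O => zr | S O => x | S m => add (nsum m x) x end.
Fixpoint npow {M : Lstruct} (n : nat) (x : M) : M :=
  match n with O => on | S O => x | S m => mul (npow m x) x end.

Definition AA0 (M : Lstruct) : Prop :=
  (forall x y z : M, add (add x y) z = add x (add y z)) /\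
  (forall x y : M, add x y = add y x) /\
  (forall x : M, add x zr = x) /\
  (forall x y z : M, mul (mul x y) z = mul x (mul y z)) /\
  (forall x y : M, mul x y = mul y x) /\
  (forall x : M, mul x on = x) /\
  (forall x y z : M, mul x (add y z) = add (mul x y) (mul x z)) /\
  (forall x : M, mul x zr = zr) /\
  (forall x y z : M, mt (mt x y) z = mt x (mt y z)) /\
  (forall x y : M, mt x y = mt y x) /\
  (forall x y z : M, jn (jn x y) z = jn x (jn y z)) /\
  (forall x y : M, jn x y = jn y x) /\
  (forall x y : M, mt x (jn x y) = x) /\
  (forall x y : M, jn x (mt x y) = x) /\
  (forall x y z : M, add x (mt y z) = mt (add x y) (add x z)) /\
  (forall x y z : M, add x (jn y z) = jn (add x y) (add x z)) /\
  (forall x y z : M, mul x (mt y z) = mt (mul x y) (mul x z)) /\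
  (forall x y z : M, mul x (jn y z) = jn (mul x y) (mul x z)) /\
  (forall x : M, le zr x) /\
  (forall x : M, Rinf (fun r => exists y : M, r = dst x (add (mt x y) on)) = 1 - absv x) /\
  (forall x : M, le x (mul x x)) /\
  (forall x y z : M, dst (add x z) (add y z) = dst x y) /\
  (forall x y z : M, dst y z <= dst (mul x y) (mul x z) + 1 - absv x) /\
  (forall (n : nat) (x y z : M), (1 <= n)%nat ->
      dst (mul x y) (mul x z) = dst (mul (npow n x) y) (mul (npow n x) z) /\
      dst (mul (npow n x) y) (mul (npow n x) z) <= dst y z) /\
  (forall (n : nat) (x y : M), (1 <= n)%nat ->
      dst (nsum n x) (nsum n y) = dst (npow n x) (npow n y) /\
      dst (npow n x) (npow n y) = dst x y) /\
  (forall x y : M, absv (mt x y) + absv (jn x y) = absv x + absv y) /\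
  (forall x y z : M, absv (add (mul x y) z) = absv (add (mt x y) z)) /\
  (forall x y z : M, absv (add (add x y) z) = absv (add (jn x y) z)) /\
  (forall x y : M, Rinf (fun r => exists t : M, r = dst (add (mt x y) t) y) = 0).

Record embedding (M N : Lstruct) := {
  emb :> M -> N;
  emb_dst : forall x y, dst (emb x) (emb y) = dst x y;
  emb_add : forall x y, emb (add x y) = add (emb x) (emb y);
  emb_mul : forall x y, emb (mul x y) = mul (emb x) (emb y);
  emb_mt : forall x y, emb (mt x y) = mt (emb x) (emb y);
  emb_jn : forall x y, emb (jn x y) = jn (emb x) (emb y);
  emb_zr : emb zr = zr;
  emb_on : emb on = on
}.

Definition cofinal {M N : Lstruct} (f : embedding M N) : Prop :=
  forall x : N, exists y : M, le x (f y).

Definition Sigma0_elementary {M N : Lstruct} (f : embedding M N) : Prop :=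
  forall p, Sigma0 p -> forall a : nat -> M, eval M a p = eval N (fun n => f (a n)) p.

Definition elementary {M N : Lstruct} (f : embedding M N) : Prop :=
  forall p, forall a : nat -> M, eval M a p = eval N (fun n => f (a n)) p.

Definition affine_MRDP : Prop :=
  forall phi, Sigma0 phi ->
    exists (psi : formula) (ys : list nat),
      QF psi /\
      (forall y, In y ys -> ~ free_in y phi) /\
      (forall n, free_in n psi -> free_in n phi \/ In n ys) /\
      forall (M : Lstruct), models_AA M ->
        forall a : nat -> M, eval M a phi = eval M a (sups ys psi).

(* Main.v *)
Require Import Defs.
From Stdlib Require Import Reals List Lra Lia Classical FunctionalExtensionality Bool.
From Coquelicot Require Import Coquelicot.
Open Scope R_scope.

Lemma Rsup_ub (S : R -> Prop) (B r : R) :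
  (forall s, S s -> s <= B) -> S r -> r <= Rsup S.
Proof.
  intros HB Hr. unfold Rsup. destruct (Lub_Rbar_correct S) as [H1 H2].
  specialize (H1 r Hr). specialize (H2 (Finite B)).
  assert (H3 : Rbar_le (Lub_Rbar S) B) by (apply H2; intros x Hx; simpl; apply HB; auto).
  destruct (Lub_Rbar S); simpl in *; auto; contradiction.
Qed.

Lemma Rsup_le (S : R -> Prop) (m r : R) :
  (forall s, S s -> s <= m) -> S r -> Rsup S <= m.
Proof.
  intros HB Hr. unfold Rsup. destruct (Lub_Rbar_correct S) as [H1 H2].
  specialize (H1 r Hr). specialize (H2 (Finite m)).
  assert (H3 : Rbar_le (Lub_Rbar S) m) by (apply H2; intros x Hx; simpl; apply HB; auto).
  destruct (Lub_Rbar S); simpl in *; auto; contradiction.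
Qed.

Lemma Rinf_lb (S : R -> Prop) (B r : R) :
  (forall s, S s -> B <= s) -> S r -> Rinf S <= r.
Proof.
  intros HB Hr. unfold Rinf. destruct (Glb_Rbar_correct S) as [H1 H2].
  specialize (H1 r Hr). specialize (H2 (Finite B)).
  assert (H3 : Rbar_le B (Glb_Rbar S)) by (apply H2; intros x Hx; simpl; apply HB; auto).
  destruct (Glb_Rbar S); simpl in *; auto; contradiction.
Qed.

Lemma Rinf_ge (S : R -> Prop) (m r : R) :
  (forall s, S s -> m <= s) -> S r -> m <= Rinf S.
Proof.
  intros HB Hr. unfold Rinf. destruct (Glb_Rbar_correct S) as [H1 H2].
  specialize (H1 r Hr). specialize (H2 (Finite m)).
  assert (H3 : Rbar_le m (Glb_Rbar S)) by (apply H2; intros x Hx; simpl; apply HB; auto).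
  destruct (Glb_Rbar S); simpl in *; auto; contradiction.
Qed.

Lemma Rinf_lt (S : R -> Prop) (B c r : R) :
  (forall s, S s -> B <= s) -> S r -> Rinf S < c -> exists s, S s /\ s < c.
Proof.
  intros HB Hr Hc. apply NNPP; intro Hn.
  assert (c <= Rinf S).
  { apply (Rinf_ge S c r); auto. intros s Hs. destruct (Rle_lt_dec c s); auto.
    exfalso; apply Hn; exists s; auto. }
  lra.
Qed.

Lemma Rsup_fext (F G : R -> R) :
  (forall y, F y = G y) -> Rsup (fun r => exists y, r = F y) = Rsup (fun r => exists y, r = G y).
Proof. intros H. replace G with F; auto. extensionality y; auto. Qed.

Lemma Rsup_fextT {T : Type} (F G : T -> R) :
  (forall y, F y = G y) -> Rsup (fun r => exists y, r = F y) = Rsup (fun r => exists y, r = G y).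
Proof. intros H. replace G with F; auto. extensionality y; auto. Qed.
Lemma Rinf_fextT {T : Type} (F G : T -> R) :
  (forall y, F y = G y) -> Rinf (fun r => exists y, r = F y) = Rinf (fun r => exists y, r = G y).
Proof. intros H. replace G with F; auto. extensionality y; auto. Qed.

Lemma upd_eq {M : Lstruct} (a : nat -> M) n x : upd a n x n = x.
Proof. unfold upd. rewrite Nat.eqb_refl. auto. Qed.
Lemma upd_neq {M : Lstruct} (a : nat -> M) n x m : m <> n -> upd a n x m = a m.
Proof. intros H. unfold upd. destruct (Nat.eqb_spec m n); congruence. Qed.
Lemma upd_upd {M : Lstruct} (a : nat -> M) n x y : upd (upd a n x) n y = upd a n y.
Proof. extensionality m. unfold upd. destruct (Nat.eqb m n); auto. Qed.
Lemma upd_comm {M : Lstruct} (a : nat -> M) n m x y : n <> m ->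
  upd (upd a n x) m y = upd (upd a m y) n x.
Proof. intros H. extensionality k. unfold upd. destruct (Nat.eqb_spec k m); destruct (Nat.eqb_spec k n); subst; auto; congruence. Qed.
Lemma upd_same {M : Lstruct} (a : nat -> M) n : upd a n (a n) = a.
Proof. extensionality k. unfold upd. destruct (Nat.eqb_spec k n); subst; auto. Qed.

Fixpoint fbd (p : formula) : R :=
  match p with
  | FOne => 1 | FDist _ _ => 1
  | FAdd p q => fbd p + fbd q
  | FScale r p => Rabs r * fbd p
  | FSup _ p => fbd p | FInf _ p => fbd p
  end.

Lemma eval_bound (M : Lstruct) p : forall a, Rabs (eval M a p) <= fbd p.
Proof.
  induction p; intros a; simpl.
  - rewrite Rabs_R1; lra.
  - pose proof (dst_ge0 M (evalt M a t1) (evalt M a t2)).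
    pose proof (dst_le1 M (evalt M a t1) (evalt M a t2)). rewrite Rabs_right; lra.
  - pose proof (IHp1 a); pose proof (IHp2 a).
    eapply Rle_trans; [apply Rabs_triang|lra].
  - rewrite Rabs_mult. apply Rmult_le_compat_l; [apply Rabs_pos| apply IHp].
  - set (S := fun r => exists x : M, r = eval M (upd a n x) p).
    assert (HS: forall s, S s -> Rabs s <= fbd p) by (intros s [x ->]; apply IHp).
    assert (H0 : S (eval M (upd a n zr) p)) by (exists zr; auto).
    assert (Rsup S <= fbd p).
    { apply (Rsup_le S _ _ (fun s Hs => Rle_trans _ _ _ (Rle_abs _) (HS s Hs)) H0). }
    assert (eval M (upd a n zr) p <= Rsup S).
    { apply (Rsup_ub S (fbd p)); auto. intros s Hs; apply (Rle_trans _ _ _ (Rle_abs _) (HS s Hs)). }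
    pose proof (HS _ H0). apply Rabs_le; split; try lra.
    apply Rabs_le_between in H2. lra.
  - set (S := fun r => exists x : M, r = eval M (upd a n x) p).
    assert (HS: forall s, S s -> Rabs s <= fbd p) by (intros s [x ->]; apply IHp).
    assert (H0 : S (eval M (upd a n zr) p)) by (exists zr; auto).
    assert (- fbd p <= Rinf S).
    { apply (Rinf_ge S _ _ (fun s Hs => proj1 (proj1 (Rabs_le_between _ _) (HS s Hs))) H0). }
    assert (Rinf S <= eval M (upd a n zr) p).
    { apply (Rinf_lb S (- fbd p)); auto. intros s Hs; apply (proj1 (proj1 (Rabs_le_between _ _) (HS s Hs))). }
    pose proof (HS _ H0). apply Rabs_le_between in H2. apply Rabs_le; split; lra.
Qed.

Lemma eval_ub M a p : eval M a p <= fbd p.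
Proof. pose proof (eval_bound M p a). apply Rabs_le_between in H. lra. Qed.
Lemma eval_lb M a p : - fbd p <= eval M a p.
Proof. pose proof (eval_bound M p a). apply Rabs_le_between in H. lra. Qed.

Lemma sup_ub (M : Lstruct) (F : M -> R) (B : R) (y : M) :
  (forall x, F x <= B) -> F y <= Rsup (fun r => exists x, r = F x).
Proof. intros HB. apply (Rsup_ub _ B). intros s [x ->]; auto. exists y; auto. Qed.
Lemma sup_le (M : Lstruct) (F : M -> R) (m : R) :
  (forall x, F x <= m) -> Rsup (fun r => exists x, r = F x) <= m.
Proof. intros HB. apply (Rsup_le _ m (F zr)). intros s [x ->]; auto. exists zr; auto. Qed.
Lemma inf_lb (M : Lstruct) (F : M -> R) (B : R) (y : M) :
  (forall x, B <= F x) -> Rinf (fun r => exists x, r = F x) <= F y.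
Proof. intros HB. apply (Rinf_lb _ B). intros s [x ->]; auto. exists y; auto. Qed.
Lemma inf_ge (M : Lstruct) (F : M -> R) (m : R) :
  (forall x, m <= F x) -> m <= Rinf (fun r => exists x, r = F x).
Proof. intros HB. apply (Rinf_ge _ m (F zr)). intros s [x ->]; auto. exists zr; auto. Qed.

Lemma sup_ub_eval (M : Lstruct) a n p (y : M) :
  eval M (upd a n y) p <= eval M a (FSup n p).
Proof. simpl. apply (sup_ub M (fun x => eval M (upd a n x) p) (fbd p)). intros; apply eval_ub. Qed.
Lemma sup_le_eval (M : Lstruct) a n p m :
  (forall x : M, eval M (upd a n x) p <= m) -> eval M a (FSup n p) <= m.
Proof. simpl. apply (sup_le M (fun x => eval M (upd a n x) p)). Qed.

Lemma sup_ub_gen (M : Lstruct) (F : M -> R) p (y : M) :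
  (forall x, exists a, F x = eval M a p) -> F y <= Rsup (fun r => exists x, r = F x).
Proof. intros HF. apply (sup_ub M F (fbd p)). intros x; destruct (HF x) as [a ->]; apply eval_ub. Qed.
Lemma inf_lb_gen (M : Lstruct) (F : M -> R) p (y : M) :
  (forall x, exists a, F x = eval M a p) -> Rinf (fun r => exists x, r = F x) <= F y.
Proof. intros HF. apply (inf_lb M F (- fbd p)). intros x; destruct (HF x) as [a ->]; apply eval_lb. Qed.

Lemma evalt_ext (M : Lstruct) t : forall a a' : nat -> M,
  (forall n, var_in_term n t -> a n = a' n) -> evalt M a t = evalt M a' t.
Proof. induction t; intros a a' H; simpl in *; try f_equal; auto. Qed.

Lemma eval_ext_free (M : Lstruct) p : forall a a' : nat -> M,
  (forall n, free_in n p -> a n = a' n) -> eval M a p = eval M a' p.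
Proof.
  induction p; intros a a' H; simpl in *.
  - auto.
  - f_equal; apply evalt_ext; auto.
  - f_equal; auto.
  - f_equal; auto.
  - apply Rsup_fextT. intros y. apply IHp. intros m Hm. unfold upd.
    destruct (Nat.eqb_spec m n); auto.
  - apply Rinf_fextT. intros y. apply IHp. intros m Hm. unfold upd.
    destruct (Nat.eqb_spec m n); auto.
Qed.

Lemma evalt_emb (M N : Lstruct) (f : embedding M N) (a : nat -> M) t :
  f (evalt M a t) = evalt N (fun n => f (a n)) t.
Proof.
  induction t; simpl; auto.
  - apply emb_zr. - apply emb_on.
  - rewrite emb_add; congruence.
  - rewrite emb_mul; congruence.
  - rewrite emb_mt; congruence.
  - rewrite emb_jn; congruence.
Qed.

Lemma femb_upd (M N : Lstruct) (f : embedding M N) (a : nat -> M) n x :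
  (fun m => f (upd a n x m)) = upd (fun m => f (a m)) n (f x).
Proof. extensionality m. unfold upd. destruct (Nat.eqb m n); auto. Qed.

Lemma tsubst_eval (M : Lstruct) x s t (a : nat -> M) :
  evalt M a (tsubst x s t) = evalt M (upd a x (evalt M a s)) t.
Proof.
  induction t; simpl; try congruence.
  unfold upd. destruct (Nat.eqb n x); auto.
Qed.

Lemma evalt_upd_notin (M : Lstruct) t (a : nat -> M) n x :
  ~ var_in_term n t -> evalt M (upd a n x) t = evalt M a t.
Proof.
  intros H. apply evalt_ext. intros m Hm. apply upd_neq. intro; subst; auto.
Qed.

Lemma fsubst_eval (M : Lstruct) x s p : forall (a : nat -> M),
  (forall y, var_in_term y s -> y <> x -> ~ bound_in y p) ->
  eval M a (fsubst x s p) = eval M (upd a x (evalt M a s)) p.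
Proof.
  induction p; intros a Hs; simpl in *.
  - auto.
  - rewrite !tsubst_eval; auto.
  - rewrite IHp1, IHp2; auto; intros y H1 H2 H3; eapply Hs; eauto.
  - rewrite IHp; auto.
  - destruct (Nat.eqb_spec n x).
    + subst. simpl. apply Rsup_fextT. intros y. rewrite upd_upd. auto.
    + simpl. apply Rsup_fextT. intros y. rewrite IHp.
      2:{ intros z H1 H2 H3. eapply Hs; eauto. }
      rewrite evalt_upd_notin.
      2:{ intro Hn. destruct (Nat.eq_dec n x); [congruence|]. eapply Hs; eauto. }
      rewrite upd_comm; auto.
  - destruct (Nat.eqb_spec n x).
    + subst. simpl. apply Rinf_fextT. intros y. rewrite upd_upd. auto.
    + simpl. apply Rinf_fextT. intros y. rewrite IHp.
      2:{ intros z H1 H2 H3. eapply Hs; eauto. }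
      rewrite evalt_upd_notin.
      2:{ intro Hn. destruct (Nat.eq_dec n x); [congruence|]. eapply Hs; eauto. }
      rewrite upd_comm; auto.
Qed.

Lemma bound_in_fsubst x s p y : bound_in y (fsubst x s p) <-> bound_in y p.
Proof.
  induction p; simpl; try tauto;
  try (destruct (Nat.eqb n x); simpl; tauto).
Qed.

Lemma var_in_tsubst x s t y : var_in_term y (tsubst x s t) -> (var_in_term y t /\ y <> x) \/ var_in_term y s.
Proof.
  induction t; simpl; intros H; try tauto.
  destruct (Nat.eqb_spec n x); subst; auto. simpl in H. subst. left; auto.
Qed.

Lemma free_in_fsubst x s p y : free_in y (fsubst x s p) -> (free_in y p /\ y <> x) \/ var_in_term y s.
Proof.
  induction p; simpl; intros H.
  - tauto.
  - destruct H as [H|H]; apply var_in_tsubst in H; tauto.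
  - destruct H as [H|H]; [apply IHp1 in H| apply IHp2 in H]; tauto.
  - apply IHp in H; tauto.
  - destruct (Nat.eqb_spec n x); simpl in H.
    + subst. left. split; [tauto|]. tauto.
    + destruct H as [H1 H2]. apply IHp in H2. tauto.
  - destruct (Nat.eqb_spec n x); simpl in H.
    + subst. left. split; [tauto|]. tauto.
    + destruct H as [H1 H2]. apply IHp in H2. tauto.
Qed.

Lemma BSup_eval (M : Lstruct) x t p (a : nat -> M) :
  ~ var_in_term x t -> (forall y, var_in_term y t -> ~ bound_in y p) ->
  eval M a (BSup x t p) = Rsup (fun r => exists z, r = eval M (upd a x (mt z (evalt M a t))) p).
Proof.
  intros H1 H2. unfold BSup. simpl. apply Rsup_fextT. intros z.
  rewrite fsubst_eval.
  - simpl. rewrite upd_eq, upd_upd, evalt_upd_notin; auto.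
  - intros y Hy Hne. simpl in Hy. destruct Hy as [Hy|Hy]; [congruence|]. auto.
Qed.

Lemma BInf_eval (M : Lstruct) x t p (a : nat -> M) :
  ~ var_in_term x t -> (forall y, var_in_term y t -> ~ bound_in y p) ->
  eval M a (BInf x t p) = Rinf (fun r => exists z, r = eval M (upd a x (mt z (evalt M a t))) p).
Proof.
  intros H1 H2. unfold BInf. simpl. apply Rinf_fextT. intros z.
  rewrite fsubst_eval.
  - simpl. rewrite upd_eq, upd_upd, evalt_upd_notin; auto.
  - intros y Hy Hne. simpl in Hy. destruct Hy as [Hy|Hy]; [congruence|]. auto.
Qed.

Lemma QF_emb (M N : Lstruct) (f : embedding M N) p (a : nat -> M) :
  QF p -> eval M a p = eval N (fun n => f (a n)) p.
Proof.
  induction p; simpl; intros H; try tauto.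
  - auto.
  - rewrite <- !evalt_emb. rewrite emb_dst. auto.
  - destruct H; f_equal; auto.
  - f_equal; auto.
Qed.

Lemma iii_ii (M N : Lstruct) (f : embedding M N) :
  elementary f -> models_AA M -> models_AA N.
Proof.
  intros He HM c Hc a. destruct Hc as [[Hl Hr] Hall].
  assert (HMc := HM c (conj (conj Hl Hr) Hall) (fun _ => zr)).
  unfold sat in *.
  rewrite (eval_ext_free N (lhs c) a (fun n => f ((fun _ : nat => zr) n))).
  2:{ intros n Hn; exfalso; apply (Hl n Hn). }
  rewrite (eval_ext_free N (rhs c) a (fun n => f ((fun _ : nat => zr) n))).
  2:{ intros n Hn; exfalso; apply (Hr n Hn). }
  rewrite <- !He. auto.
Qed.

Lemma sups_mono (M N : Lstruct) (f : embedding M N) psi :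
  QF psi -> forall ys (a : nat -> M),
  eval M a (sups ys psi) <= eval N (fun n => f (a n)) (sups ys psi).
Proof.
  intros Hq ys. induction ys as [|y ys IH]; intros a; simpl.
  - rewrite (QF_emb M N f psi a Hq). lra.
  - apply (sup_le M (fun x => eval M (upd a y x) (sups ys psi))). intros x.
    eapply Rle_trans; [apply IH|]. rewrite femb_upd.
    apply (sup_ub_eval N (fun n => f (a n)) y (sups ys psi) (f x)).
Qed.

Lemma ii_i (M N : Lstruct) (f : embedding M N) :
  affine_MRDP -> models_AA M -> models_AA N -> Sigma0_elementary f.
Proof.
  intros HMR HM HN p Hp a.
  assert (H1 : eval M a p <= eval N (fun n => f (a n)) p).
  { destruct (HMR p Hp) as [psi [ys [Hq [_ [_ Heq]]]]].
    rewrite (Heq M HM a), (Heq N HN). apply sups_mono; auto. }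
  assert (H2 : eval M a (FScale (-1) p) <= eval N (fun n => f (a n)) (FScale (-1) p)).
  { destruct (HMR (FScale (-1) p) (S0_scale _ _ Hp)) as [psi [ys [Hq [_ [_ Heq]]]]].
    rewrite (Heq M HM a), (Heq N HN). apply sups_mono; auto. }
  simpl in H2. lra.
Qed.

Definition Lat (M : Lstruct) : Prop :=
  (forall x y z : M, mt (mt x y) z = mt x (mt y z)) /\
  (forall x y : M, mt x y = mt y x) /\
  (forall x y : M, jn x y = jn y x) /\
  (forall x y : M, mt x (jn x y) = x) /\
  (forall x y : M, jn x (mt x y) = x).

Lemma AA0_Lat M : AA0 M -> Lat M.
Proof.
  intros H. destruct H as [_ [_ [_ [_ [_ [_ [_ [_ [H9 [H10 [_ [H12 [H13 [H14 _]]]]]]]]]]]]]].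
  repeat split; auto.
Qed.

Lemma mt_idem M (HL : Lat M) (x : M) : mt x x = x.
Proof.
  destruct HL as [_ [_ [_ [H4 H5]]]].
  rewrite <- (H5 x x) at 2. rewrite H4. auto.
Qed.

Lemma le_trans' M (HL : Lat M) (x y z : M) : le x y -> le y z -> le x z.
Proof.
  unfold le. intros H1 H2. rewrite <- H1. destruct HL as [Ha _].
  rewrite Ha, H2. auto.
Qed.

Lemma le_refl' M (HL : Lat M) (x : M) : le x x.
Proof. unfold le. apply mt_idem; auto. Qed.

Lemma le_mt M (HL : Lat M) (y c : M) : le (mt y c) c.
Proof.
  unfold le. pose proof (mt_idem M HL c) as Hi. destruct HL as [Ha _]. rewrite Ha, Hi. auto.
Qed.

Lemma le_jn_l M (HL : Lat M) (x y : M) : le x (jn x y).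
Proof. unfold le. destruct HL as [_ [_ [_ [H _]]]]. auto. Qed.

Lemma le_jn_r M (HL : Lat M) (x y : M) : le y (jn x y).
Proof. unfold le. destruct HL as [_ [_ [Hc [H _]]]]. rewrite Hc. auto. Qed.

Lemma le_mt_eq (M : Lstruct) (x c : M) : le x c -> mt x c = x.
Proof. auto. Qed.

Lemma emb_le (M N : Lstruct) (f : embedding M N) (x y : M) : le x y -> le (f x) (f y).
Proof. unfold le. intros H. rewrite <- emb_mt. congruence. Qed.

Fixpoint tgood (K : nat) (t : term) : Prop :=
  match t with
  | TVar n => (n < K)%nat
  | TZero | TOne => True
  | TAdd t1 t2 | TMul t1 t2 | TMeet t1 t2 | TJoin t1 t2 => tgood K t1 /\ tgood K t2
  end.

Fixpoint good (K : nat) (p : formula) : Prop :=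
  match p with
  | FOne => True
  | FDist t1 t2 => tgood K t1 /\ tgood K t2
  | FAdd p q => good K p /\ good K q
  | FScale _ p => good K p
  | FSup n p => (n < K)%nat /\ good K p
  | FInf _ _ => False
  end.

Lemma tgood_var K t n : tgood K t -> var_in_term n t -> (n < K)%nat.
Proof. induction t; simpl; intros; subst; tauto. Qed.

Lemma good_bound K p n : good K p -> bound_in n p -> (n < K)%nat.
Proof. induction p; simpl; intros; try tauto. destruct H0; subst; tauto. Qed.

Lemma good_free K p n : good K p -> free_in n p -> (n < K)%nat.
Proof.
  induction p; simpl; intros Hg Hf.
  - tauto.
  - destruct Hg; destruct Hf; [eapply (tgood_var K t1)|eapply (tgood_var K t2)]; eauto.
  - destruct Hg; destruct Hf; auto.
  - auto.
  - destruct Hg; destruct Hf; auto.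
  - tauto.
Qed.

Lemma good_ext (X : Lstruct) K p (a a' : nat -> X) :
  good K p -> (forall j, (j < K)%nat -> a j = a' j) -> eval X a p = eval X a' p.
Proof.
  intros Hg H. apply eval_ext_free. intros n Hn. apply H. eapply good_free; eauto.
Qed.

Lemma good_mono K K' p : (K <= K')%nat -> good K p -> good K' p.
Proof.
  intros HK. induction p; simpl; try tauto.
  - assert (forall t, tgood K t -> tgood K' t).
    { induction t; simpl; try tauto. lia. }
    intuition.
  - intuition lia.
Qed.

Fixpoint sz (p : formula) : nat :=
  match p with
  | FOne | FDist _ _ => 1%nat
  | FAdd p q => S (sz p + sz q)
  | FScale _ p => S (sz p)
  | FSup _ p | FInf _ p => S (sz p)
  end.

Definition pv (K : nat) (s : bool) (j : nat) : nat := (K + 2 * j + (if s then 1 else 0))%nat.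

Fixpoint bnd (K : nat) (s : bool) (o : nat) (p : formula) : formula :=
  match p with
  | FOne => FOne
  | FDist t1 t2 => FDist t1 t2
  | FAdd p q => FAdd (bnd K s o p) (bnd K s (o + sz p) q)
  | FScale r p => FScale r (bnd K s o p)
  | FSup n p => BSup n (TVar (pv K s o)) (bnd K s (S o) p)
  | FInf n p => FInf n p
  end.

Lemma bnd_bound K s p : forall o y, good K p -> bound_in y (bnd K s o p) -> (y < K)%nat.
Proof.
  induction p; intros o y Hg Hb; simpl in *; try tauto.
  - destruct Hg; destruct Hb; eauto.
  - eauto.
  - unfold BSup in Hb. simpl in Hb. destruct Hg. destruct Hb as [->|Hb]; auto.
    apply bound_in_fsubst in Hb. eauto.
Qed.

Lemma pv_ge K s j : (K <= pv K s j)%nat.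
Proof. unfold pv. lia. Qed.

Lemma pv_inj K s j s' j' : pv K s j = pv K s' j' -> s = s' /\ j = j'.
Proof. unfold pv. destruct s, s'; intros; split; auto; lia. Qed.

Lemma bnd_sup_eval (X : Lstruct) K s o n p (a : nat -> X) :
  good K (FSup n p) ->
  eval X a (bnd K s o (FSup n p)) =
  Rsup (fun r => exists z, r = eval X (upd a n (mt z (a (pv K s o)))) (bnd K s (S o) p)).
Proof.
  intros [Hn Hg]. change (bnd K s o (FSup n p)) with (BSup n (TVar (pv K s o)) (bnd K s (S o) p)).
  rewrite BSup_eval; auto.
  - simpl. intro; subst. pose proof (pv_ge K s o). lia.
  - intros y Hy Hb. simpl in Hy. subst. apply bnd_bound in Hb; auto. pose proof (pv_ge K s o). lia.
Qed.

Lemma Sigma0_bnd K s p : forall o, good K p -> Sigma0 (bnd K s o p).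
Proof.
  induction p; intros o Hg; simpl in *; try tauto.
  - constructor.
  - constructor.
  - destruct Hg; constructor; auto.
  - constructor; auto.
  - destruct Hg. constructor; auto.
    + simpl. intro; subst. pose proof (pv_ge K s o). lia.
    + intros y Hy Hb. simpl in Hy. subst. apply bnd_bound in Hb; auto. pose proof (pv_ge K s o). lia.
Qed.

Lemma bnd_dep (X : Lstruct) K s p : forall o (a1 a2 : nat -> X), good K p ->
  (forall j, (j < K)%nat -> a1 j = a2 j) ->
  (forall j, (o <= j < o + sz p)%nat -> a1 (pv K s j) = a2 (pv K s j)) ->
  eval X a1 (bnd K s o p) = eval X a2 (bnd K s o p).
Proof.
  induction p; intros o a1 a2 Hg H1 H2; simpl in Hg.
  - auto.
  - simpl. destruct Hg. f_equal; apply evalt_ext; intros m Hm; apply H1; [eapply (tgood_var K t1)|eapply (tgood_var K t2)]; eauto.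
  - simpl. destruct Hg. f_equal.
    + apply IHp1; auto. intros j Hj. apply H2. simpl. lia.
    + apply IHp2; auto. intros j Hj. apply H2. simpl. lia.
  - simpl. f_equal. apply IHp; auto. intros j Hj. apply H2. simpl. lia.
  - rewrite !bnd_sup_eval; auto. rewrite (H2 o) by (simpl; lia).
    apply Rsup_fextT. intros z. destruct Hg. apply IHp; auto.
    + intros j Hj. unfold upd. destruct (Nat.eqb j n); auto.
    + intros j Hj. unfold upd. destruct (Nat.eqb_spec (pv K s j) n).
      * pose proof (pv_ge K s j). lia.
      * apply H2. simpl. lia.
  - tauto.
Qed.

Lemma bnd_sup_upd (X : Lstruct) K s o n p (a : nat -> X) x :
  good K (FSup n p) ->
  eval X (upd a n x) (bnd K s o (FSup n p)) = eval X a (bnd K s o (FSup n p)).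
Proof.
  intros Hg. rewrite !bnd_sup_eval; auto. apply Rsup_fextT. intros z.
  rewrite upd_upd. rewrite upd_neq; auto. destruct Hg. pose proof (pv_ge K s o). lia.
Qed.

Definition merge {X : Lstruct} (K : nat) (g h : nat -> X) : nat -> X :=
  fun j => if Nat.ltb j K then g j else h j.

Lemma merge_lt {X : Lstruct} K (g h : nat -> X) j : (j < K)%nat -> merge K g h j = g j.
Proof. intros. unfold merge. destruct (Nat.ltb_spec j K); auto; lia. Qed.
Lemma merge_ge {X : Lstruct} K (g h : nat -> X) j : (K <= j)%nat -> merge K g h j = h j.
Proof. intros. unfold merge. destruct (Nat.ltb_spec j K); auto; lia. Qed.

Lemma merge_upd {X : Lstruct} K (g h : nat -> X) n x : (n < K)%nat ->
  merge K (upd g n x) h = upd (merge K g h) n x.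
Proof.
  intros. extensionality j. unfold merge, upd.
  destruct (Nat.eqb_spec j n); subst.
  - destruct (Nat.ltb_spec n K); auto; lia.
  - destruct (Nat.ltb j K); auto.
Qed.

Lemma merge_emb (M N : Lstruct) (f : embedding M N) K (g h : nat -> M) :
  (fun j => f (merge K g h j)) = merge K (fun j => f (g j)) (fun j => f (h j)).
Proof. extensionality j. unfold merge. destruct (Nat.ltb j K); auto. Qed.

Definition bsupP (l : list (nat * nat)) (body : formula) : formula :=
  fold_right (fun pr acc => BSup (fst pr) (TVar (snd pr)) acc) body l.

Definition okl (K : nat) (l : list (nat * nat)) : Prop :=
  forall pr, In pr l -> (fst pr < K)%nat /\ (K <= snd pr)%nat.

Lemma okl_cons K pr l : okl K (pr :: l) -> okl K l /\ (fst pr < K)%nat /\ (K <= snd pr)%nat.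
Proof. intros H. split; [intros q Hq; apply H; simpl; auto| apply H; simpl; auto]. Qed.

Lemma bsupP_bound K l body y : okl K l -> (forall z, bound_in z body -> (z < K)%nat) ->
  bound_in y (bsupP l body) -> (y < K)%nat.
Proof.
  induction l as [|[i k] l IH]; simpl; intros Hl Hb H; auto.
  apply okl_cons in Hl. simpl in Hl. unfold BSup in H. simpl in H.
  destruct H as [->|H]; [tauto|]. apply bound_in_fsubst in H. apply IH; tauto.
Qed.

Lemma bsupP_Sigma0 K l body : okl K l -> (forall z, bound_in z body -> (z < K)%nat) ->
  Sigma0 body -> Sigma0 (bsupP l body).
Proof.
  induction l as [|[i k] l IH]; simpl; intros Hl Hb H; auto.
  apply okl_cons in Hl as Hl'. simpl in Hl'. destruct Hl' as [Hl1 [Hi Hk]].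
  constructor; auto.
  - simpl. lia.
  - intros y Hy Hy'. simpl in Hy. subst. apply bsupP_bound with (K := K) in Hy'; auto. lia.
Qed.

Lemma bsupP_eval1 (X : Lstruct) K i k l body (a : nat -> X) :
  okl K ((i, k) :: l) -> (forall z, bound_in z body -> (z < K)%nat) ->
  eval X a (bsupP ((i, k) :: l) body) =
  Rsup (fun r => exists z, r = eval X (upd a i (mt z (a k))) (bsupP l body)).
Proof.
  intros Hl Hb. apply okl_cons in Hl as Hl'. simpl in Hl'. destruct Hl' as [Hl1 [Hi Hk]].
  change (bsupP ((i, k) :: l) body) with (BSup i (TVar k) (bsupP l body)).
  rewrite BSup_eval; auto.
  - simpl. lia.
  - intros y Hy Hy'. simpl in Hy. subst. apply bsupP_bound with (K := K) in Hy'; auto. lia.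
Qed.

Lemma bsupP_le (X : Lstruct) (Hmt : forall y c : X, le (mt y c) c) K l body c :
  okl K l -> (forall z, bound_in z body -> (z < K)%nat) -> NoDup (map fst l) ->
  forall (a : nat -> X),
  (forall a', (forall j, ~ In j (map fst l) -> a' j = a j) ->
      (forall pr, In pr l -> le (a' (fst pr)) (a (snd pr))) -> eval X a' body <= c) ->
  eval X a (bsupP l body) <= c.
Proof.
  induction l as [|[i k] l IH]; intros Hl Hb Hnd a H.
  - simpl. apply H; simpl; try tauto.
  - rewrite bsupP_eval1 with (K := K); auto.
    apply okl_cons in Hl as Hl'. simpl in Hl'. destruct Hl' as [Hl1 [Hi Hk]].
    simpl in Hnd. inversion Hnd as [|? ? Hni Hnd']; subst.
    apply sup_le. intros z. apply IH; auto.
    intros a' H1 H2. apply H.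
    + intros j Hj. simpl in Hj. rewrite H1 by tauto. apply upd_neq. intro; subst; tauto.
    + intros pr [<-|Hpr]; simpl.
      * destruct (in_dec Nat.eq_dec i (map fst l)) as [Hin|Hin]; [tauto|].
        rewrite H1 by auto. rewrite upd_eq. apply Hmt.
      * pose proof (H2 pr Hpr) as H3. rewrite upd_neq in H3; auto. destruct (Hl1 pr Hpr). lia.
Qed.

Lemma bsupP_ge (X : Lstruct) K l body :
  okl K l -> (forall z, bound_in z body -> (z < K)%nat) -> NoDup (map fst l) ->
  forall (a a' : nat -> X),
  (forall j, ~ In j (map fst l) -> a' j = a j) ->
  (forall pr, In pr l -> le (a' (fst pr)) (a (snd pr))) ->
  eval X a' body <= eval X a (bsupP l body).
Proof.
  induction l as [|[i k] l IH]; intros Hl Hb Hnd a a' H1 H2.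
  - simpl. replace a' with a; [lra|]. extensionality j. symmetry; apply H1; simpl; tauto.
  - rewrite bsupP_eval1 with (K := K); auto.
    apply okl_cons in Hl as Hl'. simpl in Hl'. destruct Hl' as [Hl1 [Hi Hk]].
    simpl in Hnd. inversion Hnd as [|? ? Hni Hnd']; subst.
    eapply Rle_trans.
    2:{ apply (sup_ub_gen X (fun z => eval X (upd a i (mt z (a k))) (bsupP l body)) (bsupP l body) (a' i)).
        intros x; eexists; eauto. }
    pose proof (H2 (i, k) (or_introl eq_refl)) as H3. simpl in H3. unfold le in H3. rewrite H3.
    apply IH; auto.
    + intros j Hj. unfold upd. destruct (Nat.eqb_spec j i); subst; auto.
      apply H1. simpl. intros [E|E]; [congruence|tauto].
    + intros pr Hpr. rewrite upd_neq. apply H2; simpl; auto. destruct (Hl1 pr Hpr). lia.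
Qed.

Fixpoint fvlt (V : nat) (p : foformula) : Prop :=
  match p with
  | FOeq t1 t2 => tgood V t1 /\ tgood V t2
  | FOneg p => fvlt V p
  | FOand p q => fvlt V p /\ fvlt V q
  | FOex n p => (n < V)%nat /\ fvlt V p
  end.

Lemma tgood_ext (X : Lstruct) V t (a a' : nat -> X) :
  tgood V t -> (forall j, (j < V)%nat -> a j = a' j) -> evalt X a t = evalt X a' t.
Proof. intros Hg H. apply evalt_ext. intros n Hn. apply H. eapply tgood_var; eauto. Qed.

Lemma holds_ext (X : Lstruct) V p : forall (a a' : nat -> X),
  fvlt V p -> (forall j, (j < V)%nat -> a j = a' j) -> (holds X a p <-> holds X a' p).
Proof.
  induction p; intros a a' Hf H; simpl in *.
  - destruct Hf. rewrite (tgood_ext X V t1 a a'), (tgood_ext X V t2 a a'); auto; tauto.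
  - rewrite (IHp a a'); auto; tauto.
  - destruct Hf. rewrite (IHp1 a a'), (IHp2 a a'); auto; tauto.
  - destruct Hf. split; intros [x Hx]; exists x.
    + rewrite <- (IHp (upd a n x) (upd a' n x)); auto.
      intros j Hj. unfold upd. destruct (Nat.eqb j n); auto.
    + rewrite (IHp (upd a n x) (upd a' n x)); auto.
      intros j Hj. unfold upd. destruct (Nat.eqb j n); auto.
Qed.

Definition Def (X : Lstruct) (V : nat) (Q : (nat -> X) -> Prop) : Prop :=
  exists p, fvlt V p /\ forall a, holds X a p <-> Q a.

Lemma Def_indep (X : Lstruct) V Q (a a' : nat -> X) : Def X V Q -> (forall j, (j < V)%nat -> a j = a' j) -> (Q a <-> Q a').
Proof. intros [p [Hf Hp]] H. rewrite <- !Hp. apply holds_ext with V; auto. Qed.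

Lemma Def_ext (X : Lstruct) V Q Q' : Def X V Q -> (forall a, Q a <-> Q' a) -> Def X V Q'.
Proof. intros [p [Hf Hp]] H. exists p; split; auto. intros a. rewrite Hp; auto. Qed.

Lemma Def_mono (X : Lstruct) V V' Q : (V <= V')%nat -> Def X V Q -> Def X V' Q.
Proof.
  intros HV [p [Hf Hp]]. exists p; split; auto. clear Hp. revert Hf.
  assert (forall t, tgood V t -> tgood V' t) by (induction t; simpl; try tauto; lia).
  induction p; simpl; intros; intuition (try lia; auto).
Qed.

Lemma Def_eq (X : Lstruct) V t1 t2 : tgood V t1 -> tgood V t2 -> Def X V (fun a => evalt X a t1 = evalt X a t2).
Proof. intros. exists (FOeq t1 t2). simpl; split; auto. tauto. Qed.

Lemma Def_not (X : Lstruct) V Q : Def X V Q -> Def X V (fun a => ~ Q a).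
Proof. intros [p [Hf Hp]]. exists (FOneg p). simpl. split; auto. intros a. rewrite Hp; tauto. Qed.

Lemma Def_and (X : Lstruct) V Q Q' : Def X V Q -> Def X V Q' -> Def X V (fun a => Q a /\ Q' a).
Proof.
  intros [p [Hf Hp]] [q [Hg Hq]]. exists (FOand p q). simpl. split; auto.
  intros a. rewrite Hp, Hq; tauto.
Qed.

Lemma Def_or (X : Lstruct) V Q Q' : Def X V Q -> Def X V Q' -> Def X V (fun a => Q a \/ Q' a).
Proof.
  intros H1 H2. apply Def_ext with (fun a => ~ (~ Q a /\ ~ Q' a)).
  - apply Def_not, Def_and; apply Def_not; auto.
  - intros a. tauto.
Qed.

Lemma Def_imp (X : Lstruct) V Q Q' : Def X V Q -> Def X V Q' -> Def X V (fun a => Q a -> Q' a).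
Proof.
  intros H1 H2. apply Def_ext with (fun a => ~ Q a \/ Q' a).
  - apply Def_or; auto; apply Def_not; auto.
  - intros a. tauto.
Qed.

Lemma Def_ex (X : Lstruct) V n Q : (n < V)%nat -> Def X V Q -> Def X V (fun a => exists x, Q (upd a n x)).
Proof.
  intros Hn [p [Hf Hp]]. exists (FOex n p). simpl. split; auto.
  intros a. split; intros [x Hx]; exists x; apply Hp; auto.
Qed.

Lemma Def_all (X : Lstruct) V n Q : (n < V)%nat -> Def X V Q -> Def X V (fun a => forall x, Q (upd a n x)).
Proof.
  intros Hn H. apply Def_ext with (fun a => ~ exists x, ~ Q (upd a n x)).
  - apply Def_not. apply (Def_ex X V n (fun a => ~ Q a)); auto. apply Def_not; auto.
  - intros a. split; intros H1.
    + intros x. apply NNPP. intro H2. apply H1. eauto.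
    + intros [x Hx]. auto.
Qed.

Lemma Def_const (X : Lstruct) V (P0 : Prop) : Def X V (fun _ => P0).
Proof.
  destruct (classic P0) as [H|H].
  - exists (FOeq TZero TZero). simpl. split; auto. tauto.
  - exists (FOneg (FOeq TZero TZero)). simpl. split; auto. tauto.
Qed.

Lemma Def_finex (X : Lstruct) V (l : list R) (Q : R -> (nat -> X) -> Prop) :
  (forall u, Def X V (Q u)) -> Def X V (fun a => exists u, In u l /\ Q u a).
Proof.
  intros H. induction l as [|u l IH].
  - apply Def_ext with (fun _ => False). apply Def_const. intros a; simpl. firstorder.
  - apply Def_ext with (fun a => Q u a \/ exists u', In u' l /\ Q u' a).
    + apply Def_or; auto.
    + intros a. simpl. split.
      * intros [H1|[u' [H1 H2]]]; eauto.
      * intros [u' [[<-|H1] H2]]; eauto.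
Qed.

Definition lep {P : Lstruct} (x y : P) : Prop := exists z, add x z = y.


Lemma PA_ind (P : Lstruct) (HP : PAmodel P) V Q n (a : nat -> P) :
  Def P V Q -> Q (upd a n zr) -> (forall x, Q (upd a n x) -> Q (upd a n (add x on))) ->
  forall x, Q (upd a n x).
Proof.
  intros [p [Hf Hp]] H0 HS x. destruct HP as [_ [_ [_ [_ [_ [_ [_ [_ [_ Hind]]]]]]]]].
  apply Hp. apply Hind; [apply Hp; auto|]. intros y Hy. apply Hp. apply HS. apply Hp; auto.
Qed.

Lemma PA_a0 P (HP : PAmodel P) (x : P) : add x zr = x.
Proof. destruct HP as [_ [_ [_ [_ [_ [H _]]]]]]. auto. Qed.
Lemma PA_aS P (HP : PAmodel P) (x y : P) : add x (add y on) = add (add x y) on.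
Proof. destruct HP as [_ [_ [_ [_ [_ [_ [H _]]]]]]]. auto. Qed.
Lemma PA_S0 P (HP : PAmodel P) (x : P) : add x on <> zr.
Proof. destruct HP as [_ [_ [_ [H _]]]]. auto. Qed.
Lemma PA_Sinj P (HP : PAmodel P) (x y : P) : add x on = add y on -> x = y.
Proof. destruct HP as [_ [_ [_ [_ [H _]]]]]. auto. Qed.
Lemma PA_disc P (HP : PAmodel P) (x y : P) : x <> y -> dst x y = 1.
Proof. destruct HP as [H _]. auto. Qed.
Lemma PA_lemt P (HP : PAmodel P) (x y : P) : lep x y -> mt x y = x /\ jn x y = y.
Proof. destruct HP as [_ [H _]]. auto. Qed.
Lemma PA_nlemt P (HP : PAmodel P) (x y : P) : ~ lep x y -> mt x y = y /\ jn x y = x.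
Proof. destruct HP as [_ [_ [H _]]]. auto. Qed.

Ltac usimpl := unfold upd; simpl.

Lemma PA_add0l P (HP : PAmodel P) (x : P) : add zr x = x.
Proof.
  pose (Q := fun a : nat -> P => add zr (a 0%nat) = a 0%nat).
  assert (HD : Def P 1 Q).
  { apply Def_ext with (fun a => evalt P a (TAdd TZero (TVar 0)) = evalt P a (TVar 0)).
    - apply Def_eq; simpl; repeat split; lia.
    - intros a; simpl; tauto. }
  pose proof (PA_ind P HP 1 Q 0 (fun _ => zr) HD) as H. unfold Q in H. usimpl. unfold upd in H; simpl in H.
  apply H.
  - apply PA_a0; auto.
  - intros y Hy. rewrite PA_aS; congruence.
Qed.

Lemma PA_addSl P (HP : PAmodel P) (x y : P) : add (add x on) y = add (add x y) on.
Proof.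
  pose (Q := fun a : nat -> P => add (add (a 1%nat) on) (a 0%nat) = add (add (a 1%nat) (a 0%nat)) on).
  assert (HD : Def P 2 Q).
  { apply Def_ext with (fun a => evalt P a (TAdd (TAdd (TVar 1) TOne) (TVar 0)) = evalt P a (TAdd (TAdd (TVar 1) (TVar 0)) TOne)).
    - apply Def_eq; simpl; repeat split; lia.
    - intros a; simpl; tauto. }
  pose proof (PA_ind P HP 2 Q 0 (fun n => x) HD) as H. unfold Q in H. unfold upd in H; simpl in H.
  apply H.
  - rewrite !PA_a0; auto.
  - intros z Hz. rewrite !PA_aS; congruence.
Qed.

Lemma PA_comm P (HP : PAmodel P) (x y : P) : add x y = add y x.
Proof.
  pose (Q := fun a : nat -> P => add (a 1%nat) (a 0%nat) = add (a 0%nat) (a 1%nat)).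
  assert (HD : Def P 2 Q).
  { apply Def_ext with (fun a => evalt P a (TAdd (TVar 1) (TVar 0)) = evalt P a (TAdd (TVar 0) (TVar 1))).
    - apply Def_eq; simpl; repeat split; lia.
    - intros a; simpl; tauto. }
  pose proof (PA_ind P HP 2 Q 0 (fun n => x) HD) as H. unfold Q in H. unfold upd in H; simpl in H.
  apply H.
  - rewrite PA_a0, PA_add0l; auto.
  - intros z Hz. rewrite PA_aS, PA_addSl; congruence.
Qed.

Lemma PA_assoc P (HP : PAmodel P) (x y z : P) : add (add x y) z = add x (add y z).
Proof.
  pose (Q := fun a : nat -> P => add (add (a 1%nat) (a 2%nat)) (a 0%nat) = add (a 1%nat) (add (a 2%nat) (a 0%nat))).
  assert (HD : Def P 3 Q).
  { apply Def_ext with (fun a => evalt P a (TAdd (TAdd (TVar 1) (TVar 2)) (TVar 0)) = evalt P a (TAdd (TVar 1) (TAdd (TVar 2) (TVar 0)))).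
    - apply Def_eq; simpl; repeat split; lia.
    - intros a; simpl; tauto. }
  pose proof (PA_ind P HP 3 Q 0 (fun n => if Nat.eqb n 1 then x else y) HD) as H. unfold Q in H. unfold upd in H; simpl in H.
  apply H.
  - rewrite !PA_a0; auto.
  - intros w Hw. rewrite !PA_aS; congruence.
Qed.

Lemma PA_pred P (HP : PAmodel P) (x : P) : x = zr \/ exists y, x = add y on.
Proof.
  pose (Q := fun a : nat -> P => a 0%nat = zr \/ exists y, a 0%nat = add y on).
  assert (HD : Def P 2 Q).
  { apply Def_ext with (fun a => evalt P a (TVar 0) = evalt P a TZero \/
        exists y, evalt P (upd a 1 y) (TVar 0) = evalt P (upd a 1 y) (TAdd (TVar 1) TOne)).
    - apply Def_or. apply Def_eq; simpl; repeat split; lia.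
      apply (Def_ex P 2 1 (fun a => evalt P a (TVar 0) = evalt P a (TAdd (TVar 1) TOne))); auto.
      apply Def_eq; simpl; repeat split; lia.
    - intros a; unfold Q; simpl. usimpl. tauto. }
  pose proof (PA_ind P HP 2 Q 0 (fun n => zr) HD) as H. unfold Q in H. unfold upd in H; simpl in H.
  apply H; auto.
  intros w _. right. exists w; auto.
Qed.

Lemma lep_refl P (HP : PAmodel P) (x : P) : lep x x.
Proof. exists zr. apply PA_a0; auto. Qed.
Lemma lep_trans P (HP : PAmodel P) (x y w : P) : lep x y -> lep y w -> lep x w.
Proof. intros [z Hz] [u Hu]. exists (add z u). rewrite <- PA_assoc; auto. congruence. Qed.
Lemma lep_addr P (HP : PAmodel P) (x y : P) : lep x (add x y).
Proof. exists y; auto. Qed.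
Lemma lep_addl P (HP : PAmodel P) (x y : P) : lep y (add x y).
Proof. exists x; apply PA_comm; auto. Qed.
Lemma lep_0 P (HP : PAmodel P) (y : P) : lep y zr -> y = zr.
Proof.
  intros [z Hz]. destruct (PA_pred P HP z) as [->|[z' ->]].
  - rewrite PA_a0 in Hz; auto.
  - rewrite PA_aS in Hz; auto. exfalso; apply (PA_S0 P HP _ Hz).
Qed.
Lemma lep_S P (HP : PAmodel P) (y c : P) : lep y (add c on) -> lep y c \/ y = add c on.
Proof.
  intros [z Hz]. destruct (PA_pred P HP z) as [->|[z' ->]].
  - rewrite PA_a0 in Hz; auto.
  - rewrite PA_aS in Hz; auto. apply PA_Sinj in Hz; auto. left; exists z'; auto.
Qed.
Lemma lep_Sr P (HP : PAmodel P) (y c : P) : lep y c -> lep y (add c on).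
Proof. intros [z Hz]. exists (add z on). rewrite PA_aS; congruence. Qed.

Lemma le_lep P (HP : PAmodel P) (x y : P) : le x y <-> lep x y.
Proof.
  unfold le. split.
  - intros H. destruct (classic (lep x y)) as [H1|H1]; auto.
    apply PA_nlemt in H1; auto. destruct H1 as [H1 _]. rewrite H1 in H. subst. apply lep_refl; auto.
  - intros H. apply PA_lemt; auto.
Qed.

Lemma PA_mt_le P (HP : PAmodel P) (y c : P) : le (mt y c) c.
Proof.
  apply le_lep; auto. destruct (classic (lep y c)) as [H|H].
  - rewrite (proj1 (PA_lemt P HP _ _ H)); auto.
  - rewrite (proj1 (PA_nlemt P HP _ _ H)); apply lep_refl; auto.
Qed.

Lemma Def_lep P V u w z : (u < V)%nat -> (w < V)%nat -> (z < V)%nat -> z <> u -> z <> w ->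
  Def P V (fun a => lep (a u) (a w)).
Proof.
  intros. apply Def_ext with (fun a => exists x, evalt P (upd a z x) (TAdd (TVar u) (TVar z)) = evalt P (upd a z x) (TVar w)).
  - apply (Def_ex P V z (fun a => evalt P a (TAdd (TVar u) (TVar z)) = evalt P a (TVar w))); auto.
    apply Def_eq; simpl; repeat split; lia.
  - intros a. simpl. unfold lep. split; intros [x Hx]; exists x.
    + rewrite upd_eq, !upd_neq in Hx; auto.
    + rewrite upd_eq, !upd_neq; auto.
Qed.

Fixpoint vals (p : formula) : list R :=
  match p with
  | FOne => 1 :: nil
  | FDist _ _ => 0 :: 1 :: nil
  | FAdd p q => flat_map (fun u => map (fun w => u + w) (vals q)) (vals p)
  | FScale r p => map (fun u => r * u) (vals p)
  | FSup _ p | FInf _ p => vals p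
  end.

Lemma fin_max (l : list R) : forall (S : R -> Prop), (forall s, S s -> In s l) -> (exists r, S r) ->
  exists m, S m /\ forall s, S s -> s <= m.
Proof.
  induction l as [|u l IH]; intros S HS [r Hr].
  - destruct (HS r Hr).
  - destruct (classic (exists r', S r' /\ r' <> u)) as [[r' [H1 H2]]|H].
    + destruct (IH (fun s => S s /\ s <> u)) as [m [[Hm1 Hm2] Hm3]].
      * intros s [Hs1 Hs2]. destruct (HS s Hs1); [congruence|auto].
      * eauto.
      * destruct (classic (S u /\ m < u)) as [[Hu1 Hu2]|Hu].
        -- exists u; split; auto. intros s Hs. destruct (Req_dec s u) as [E|E]; [lra|].
           pose proof (Hm3 s (conj Hs E)). lra.
        -- exists m; split; auto. intros s Hs. destruct (Req_dec s u); [|apply Hm3; auto].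
           subst. apply Rnot_lt_le. intro. apply Hu; auto.
    + exists u. assert (r = u) by (apply NNPP; intro; apply H; eauto). subst.
      split; auto. intros s Hs. destruct (Req_dec s u); [lra|]. exfalso; apply H; eauto.
Qed.

Lemma fin_min (l : list R) : forall (S : R -> Prop), (forall s, S s -> In s l) -> (exists r, S r) ->
  exists m, S m /\ forall s, S s -> m <= s.
Proof.
  intros S HS Hr. destruct (fin_max (map Ropp l) (fun s => S (- s))) as [m [Hm1 Hm2]].
  - intros s Hs. apply HS in Hs. replace s with (- - s) by lra. apply in_map; auto.
  - destruct Hr as [r Hr]. exists (- r). rewrite Ropp_involutive; auto.
  - exists (- m). split; auto. intros s Hs. pose proof (Hm2 (- s)). rewrite Ropp_involutive in H. specialize (H Hs). lra.
Qed.

Lemma fin_sup (X : Lstruct) (F : X -> R) l : (forall x, In (F x) l) ->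
  exists x0, Rsup (fun r => exists x, r = F x) = F x0 /\ forall x, F x <= F x0.
Proof.
  intros H. destruct (fin_max l (fun r => exists x, r = F x)) as [m [[x0 ->] Hm]].
  - intros s [x ->]; auto.
  - exists (F zr); exists zr; auto.
  - exists x0. assert (Hx : forall x, F x <= F x0) by (intros x; apply Hm; eauto).
    split; auto. apply Rle_antisym.
    + apply sup_le; auto.
    + apply (sup_ub X F (F x0)); auto.
Qed.

Lemma fin_inf (X : Lstruct) (F : X -> R) l : (forall x, In (F x) l) ->
  exists x0, Rinf (fun r => exists x, r = F x) = F x0 /\ forall x, F x0 <= F x.
Proof.
  intros H. destruct (fin_min l (fun r => exists x, r = F x)) as [m [[x0 ->] Hm]].
  - intros s [x ->]; auto.
  - exists (F zr); exists zr; auto.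
  - exists x0. assert (Hx : forall x, F x0 <= F x) by (intros x; apply Hm; eauto).
    split; auto. apply Rle_antisym.
    + apply (inf_lb X F (F x0)); auto.
    + apply inf_ge; auto.
Qed.

Lemma PA_dst P (HP : PAmodel P) (x y : P) : (x = y /\ dst x y = 0) \/ (x <> y /\ dst x y = 1).
Proof.
  destruct (classic (x = y)) as [->|H].
  - left; split; auto; apply dst_refl.
  - right; split; auto; apply PA_disc; auto.
Qed.

Lemma vals_in P (HP : PAmodel P) p : forall a, In (eval P a p) (vals p).
Proof.
  induction p; intros a; simpl.
  - auto.
  - destruct (PA_dst P HP (evalt P a t1) (evalt P a t2)) as [[_ ->]|[_ ->]]; auto.
  - apply in_flat_map. exists (eval P a p1). split; auto. apply in_map; auto.
  - apply in_map; auto.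
  - destruct (fin_sup P (fun x => eval P (upd a n x) p) (vals p)) as [x0 [-> _]]; auto.
  - destruct (fin_inf P (fun x => eval P (upd a n x) p) (vals p)) as [x0 [-> _]]; auto.
Qed.

Lemma PA_sup_att P (HP : PAmodel P) a n p : exists x, eval P (upd a n x) p = eval P a (FSup n p).
Proof.
  destruct (fin_sup P (fun x => eval P (upd a n x) p) (vals p)) as [x0 [H1 _]].
  - intros; apply vals_in; auto.
  - exists x0. simpl. rewrite H1. auto.
Qed.

Lemma Def_eval P (HP : PAmodel P) V p : good V p -> forall v, Def P V (fun a => eval P a p = v).
Proof.
  induction p; simpl; intros Hg v.
  - apply Def_const.
  - destruct Hg as [Hg1 Hg2].
    apply Def_ext with (fun a => (evalt P a t1 = evalt P a t2 /\ v = 0) \/ (~ evalt P a t1 = evalt P a t2 /\ v = 1)).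
    + apply Def_or; apply Def_and; try apply Def_const; try apply Def_not; apply Def_eq; auto.
    + intros a. destruct (PA_dst P HP (evalt P a t1) (evalt P a t2)) as [[H1 H2]|[H1 H2]]; (rewrite H2;
      split; [intros [[H3 H4]|[H3 H4]]; first [lra | tauto]
             | intros H; first [left; split; [auto|lra] | right; split; [auto|lra]]]).
  - destruct Hg as [Hg1 Hg2].
    apply Def_ext with (fun a => exists u, In u (vals p1) /\ (eval P a p1 = u /\ eval P a p2 = v - u)).
    + apply (Def_finex P V (vals p1) (fun u a => eval P a p1 = u /\ eval P a p2 = v - u)).
      intros u. apply Def_and; auto.
    + intros a. split.
      * intros [u [_ [H1 H2]]]. lra.
      * intros H. exists (eval P a p1). split; [apply vals_in; auto|]. split; auto; lra.
  - apply Def_ext with (fun a => exists u, In u (vals p) /\ (eval P a p = u /\ r * u = v)).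
    + apply (Def_finex P V (vals p) (fun u a => eval P a p = u /\ r * u = v)).
      intros u. apply Def_and; auto. apply Def_const.
    + intros a. split.
      * intros [u [_ [H1 H2]]]. subst; auto.
      * intros H. exists (eval P a p). split; [apply vals_in; auto|]. split; auto.
  - destruct Hg as [Hn Hg].
    apply Def_ext with (fun a => (exists x, eval P (upd a n x) p = v) /\
       (forall x, (fun a' => exists u, In u (vals p) /\ (u <= v /\ eval P a' p = u)) (upd a n x))).
    + apply Def_and.
      * apply (Def_ex P V n (fun a => eval P a p = v)); auto.
      * apply (Def_all P V n (fun a' => exists u, In u (vals p) /\ (u <= v /\ eval P a' p = u))); auto. apply (Def_finex P V (vals p) (fun u a => u <= v /\ eval P a p = u)).
        intros u. apply Def_and; auto. apply Def_const.
    + intros a. simpl. split.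
      * intros [[x Hx] H2]. apply Rle_antisym.
        -- apply sup_le. intros y. destruct (H2 y) as [u [_ [H3 H4]]]. lra.
        -- rewrite <- Hx. apply (sup_ub_eval P a n p x).
      * intros H. split.
        -- destruct (PA_sup_att P HP a n p) as [x Hx]. exists x. simpl in Hx. congruence.
        -- intros x. exists (eval P (upd a n x) p). split; [apply vals_in; auto|]. split; auto.
           rewrite <- H. apply (sup_ub_eval P a n p x).
  - tauto.
Qed.

Ltac urw := repeat (first [rewrite upd_eq | rewrite upd_neq by lia]).
Ltac urw_in H := repeat (first [rewrite upd_eq in H | rewrite upd_neq in H by lia]).

Lemma Q_indep3 (P : Lstruct) V Q (a : nat -> P) i vx k c y x :
  Def P V Q -> (V <= k)%nat ->
  (Q (upd (upd (upd a k c) i y) vx x) <-> Q (upd (upd a i y) vx x)).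
Proof.
  intros HD Hk. apply (Def_indep P V Q); auto. intros j Hj. unfold upd.
  destruct (Nat.eqb j vx); auto. destruct (Nat.eqb j i); auto.
  destruct (Nat.eqb_spec j k); auto. lia.
Qed.

Lemma Q_indep1 (P : Lstruct) V Q (a : nat -> P) k c :
  Def P V Q -> (V <= k)%nat -> (Q (upd a k c) <-> Q a).
Proof.
  intros HD Hk. apply (Def_indep P V Q); auto. intros j Hj. unfold upd.
  destruct (Nat.eqb_spec j k); auto. lia.
Qed.

Lemma coll1 P (HP : PAmodel P) V Q i vx :
  Def P V Q -> (i < V)%nat -> (vx < V)%nat -> i <> vx ->
  forall (a : nat -> P) b,
  (forall y, lep y b -> exists x, Q (upd (upd a i y) vx x)) ->
  exists B, forall y, lep y b -> exists x, lep x B /\ Q (upd (upd a i y) vx x).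
Proof.
  intros HD Hi Hvx Hne a b Hb.
  pose (Coll := fun c : P => (forall y, lep y c -> exists x, Q (upd (upd a i y) vx x)) ->
     exists B, forall y, lep y c -> exists x, lep x B /\ Q (upd (upd a i y) vx x)).
  pose (R := fun a0 : nat -> P =>
     (forall y, lep y (a0 V) -> exists x, Q (upd (upd a0 i y) vx x)) ->
     exists B, forall y, lep y (a0 V) -> exists x, lep x B /\ Q (upd (upd a0 i y) vx x)).
  assert (HR : forall c, R (upd a V c) <-> Coll c).
  { intros c. unfold R, Coll. urw.
    assert (E : forall y x, Q (upd (upd (upd a V c) i y) vx x) <-> Q (upd (upd a i y) vx x))
      by (intros; apply Q_indep3 with V; auto).
    split; intros H1 H2.
    - destruct H1 as [B HB].
      + intros y Hy. destruct (H2 y Hy) as [x Hx]. exists x. apply E; auto.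
      + exists B. intros y Hy. destruct (HB y Hy) as [x [Hx1 Hx2]]. exists x. split; auto. apply E; auto.
    - destruct H1 as [B HB].
      + intros y Hy. destruct (H2 y Hy) as [x Hx]. exists x. apply E; auto.
      + exists B. intros y Hy. destruct (HB y Hy) as [x [Hx1 Hx2]]. exists x. split; auto. apply E; auto. }
  assert (HDR : Def P (V + 3) R).
  { apply Def_imp.
    - apply Def_ext with (fun a0 => forall y, (fun a1 => lep (a1 i) (a1 V) -> exists x, Q (upd a1 vx x)) (upd a0 i y)).
      + apply (Def_all P (V+3) i (fun a1 => lep (a1 i) (a1 V) -> exists x, Q (upd a1 vx x))); [lia|].
        apply Def_imp. apply (Def_lep P (V+3) i V (S (S V))); lia.
        apply (Def_ex P (V+3) vx Q); [lia|]. apply Def_mono with V; auto; lia.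
      + intros a0. simpl.
        assert (E2 : forall y, upd a0 i y V = a0 V) by (intros; apply upd_neq; lia).
        setoid_rewrite E2. setoid_rewrite upd_eq. tauto.
    - apply Def_ext with (fun a0 => exists B, (fun a2 => forall y, (fun a1 =>
            lep (a1 i) (a1 V) -> exists x, (fun a3 => lep (a3 vx) (a3 (S V)) /\ Q a3) (upd a1 vx x)) (upd a2 i y)) (upd a0 (S V) B)).
      + apply (Def_ex P (V+3) (S V) (fun a2 => forall y, (fun a1 =>
            lep (a1 i) (a1 V) -> exists x, (fun a3 => lep (a3 vx) (a3 (S V)) /\ Q a3) (upd a1 vx x)) (upd a2 i y))); [lia|].
        apply (Def_all P (V+3) i (fun a1 =>
            lep (a1 i) (a1 V) -> exists x, (fun a3 => lep (a3 vx) (a3 (S V)) /\ Q a3) (upd a1 vx x))); [lia|].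
        apply Def_imp.
        apply (Def_lep P (V+3) i V (S (S V))); lia.
        apply (Def_ex P (V+3) vx (fun a3 => lep (a3 vx) (a3 (S V)) /\ Q a3)); [lia|]. apply Def_and. apply (Def_lep P (V+3) vx (S V) (S (S V))); lia.
        apply Def_mono with V; auto; lia.
      + intros a0. simpl. split; intros [B HB]; exists B.
        * intros y Hy. urw_in HB. destruct (HB y) as [x [Hx1 Hx2]]; [urw; auto|]. exists x. urw_in Hx1.
          split; auto. apply (Q_indep3 P V Q a0 i vx (S V) B y x); auto.
        * intros y. urw. intros Hy. destruct (HB y Hy) as [x [Hx1 Hx2]]. exists x. urw. split; auto.
          apply (Q_indep3 P V Q a0 i vx (S V) B y x); auto. }
  assert (Hall : forall c, R (upd a V c)).
  { apply (PA_ind P HP (V+3) R V a HDR).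
    - apply HR. intros H. destruct (H zr (lep_refl P HP zr)) as [x0 Hx0]. exists x0.
      intros y Hy. apply lep_0 in Hy; auto. subst. exists x0. split; auto. apply lep_refl; auto.
    - intros c IH. apply HR. apply HR in IH. intros H.
      destruct IH as [B HB].
      + intros y Hy. apply H. apply lep_Sr; auto.
      + destruct (H (add c on) (lep_refl P HP _)) as [x1 Hx1].
        exists (add B x1). intros y Hy. apply lep_S in Hy; auto. destruct Hy as [Hy | ->].
        * destruct (HB y Hy) as [x [Hx2 Hx3]]. exists x. split; auto.
          apply lep_trans with B; auto. apply lep_addr; auto.
        * exists x1. split; auto. apply lep_addl; auto. }
  apply (HR b); auto.
Qed.

Definition BndL {P : Lstruct} (L : list nat) (b : P) (a a' : nat -> P) : Prop :=
  (forall j, ~ In j L -> a' j = a j) /\ (forall j, In j L -> lep (a' j) b).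

Lemma BndL_cons {P : Lstruct} i L (b : P) a a' :
  BndL (i :: L) b a a' <-> exists y, lep y b /\ BndL L b (upd a i y) a'.
Proof.
  unfold BndL. split.
  - intros [H1 H2]. exists (a' i). split; [apply H2; simpl; auto|]. split; auto.
    intros j Hj. unfold upd. destruct (Nat.eqb_spec j i); subst; auto.
    apply H1. simpl. intros [E|E]; [congruence|auto].
    intros j Hj; apply H2; simpl; auto.
  - intros [y [Hy [G1 G2]]]. split.
    + intros j Hj. simpl in Hj. rewrite G1 by tauto. apply upd_neq. intro; subst; tauto.
    + intros j [<-|Hj]; auto.
      destruct (in_dec Nat.eq_dec i L); auto. rewrite G1 by auto. rewrite upd_eq; auto.
Qed.

Lemma Def_forallL (P : Lstruct) W V (L : list nat) (Phi : (nat -> P) -> Prop) :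
  Def P W Phi -> (V < W)%nat -> (S (S V) < W)%nat -> (forall j, In j L -> (j < V)%nat) ->
  Def P W (fun a => forall a', BndL L (a V) a a' -> Phi a').
Proof.
  intros HPhi HV HV2 HL. induction L as [|i L IH].
  - apply Def_ext with Phi; auto. intros a. split.
    + intros H a' [H1 _]. replace a' with a; auto. extensionality j. symmetry; apply H1; simpl; auto.
    + intros H. apply H. split; simpl; tauto.
  - assert (Hi : (i < V)%nat) by (apply HL; simpl; auto).
    apply Def_ext with (fun a => forall y, (fun a1 => lep (a1 i) (a1 V) -> forall a', BndL L (a1 V) a1 a' -> Phi a') (upd a i y)).
    + apply (Def_all P W i (fun a1 => lep (a1 i) (a1 V) -> forall a', BndL L (a1 V) a1 a' -> Phi a')); [lia|].
      apply Def_imp. apply (Def_lep P W i V (S (S V))); lia.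
      apply IH. intros j Hj; apply HL; simpl; auto.
    + intros a. simpl.
      assert (E2 : forall y, upd a i y V = a V) by (intros; apply upd_neq; lia).
      setoid_rewrite E2. setoid_rewrite upd_eq. split.
      * intros H a' Ha'. apply BndL_cons in Ha'. destruct Ha' as [y [Hy Hb]]. apply (H y); auto.
      * intros H y Hy a' Ha'. apply H. apply BndL_cons. eauto.
Qed.

Lemma collL P (HP : PAmodel P) V Q vx L :
  Def P V Q -> (vx < V)%nat -> (forall j, In j L -> (j < V)%nat /\ j <> vx) ->
  forall (a : nat -> P),
  (forall a', BndL L (a V) a a' -> exists x, Q (upd a' vx x)) ->
  exists B, forall a', BndL L (a V) a a' -> exists x, lep x B /\ Q (upd a' vx x).
Proof.
  intros HD Hvx. revert V Q HD Hvx. induction L as [|i L IH]; intros V Q HD Hvx HL a H.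
  - destruct (H a) as [x Hx].
    + split; simpl; tauto.
    + exists x. intros a' [H1 _]. replace a' with a.
      * exists x; split; auto. apply lep_refl; auto.
      * extensionality j. symmetry; apply H1; simpl; auto.
  - assert (Hi : (i < V)%nat /\ i <> vx) by (apply HL; simpl; auto).
    pose (Q1 := fun a0 : nat -> P => forall a', BndL L (a0 V) a0 a' ->
                  (fun a'' => exists x, lep x (a'' (S V)) /\ Q (upd a'' vx x)) a').
    assert (HD1 : Def P (V + 3) Q1).
    { apply Def_forallL; try lia.
      - apply Def_ext with (fun a'' => exists x, (fun a3 => lep (a3 vx) (a3 (S V)) /\ Q a3) (upd a'' vx x)).
        + apply (Def_ex P (V+3) vx (fun a3 => lep (a3 vx) (a3 (S V)) /\ Q a3)); [lia|].
          apply Def_and. apply (Def_lep P (V+3) vx (S V) (S (S V))); lia.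
          apply Def_mono with V; auto; lia.
        + intros a''. simpl. split; intros [x Hx]; exists x.
          * rewrite upd_eq, upd_neq in Hx by lia; auto.
          * rewrite upd_eq, upd_neq by lia; auto.
      - intros j Hj. apply HL; simpl; auto. }
    destruct (coll1 P HP (V + 3) Q1 i (S V) HD1 ltac:(lia) ltac:(lia) ltac:(lia) a (a V)) as [Bs HBs].
    + intros y Hy.
      destruct (IH V Q HD Hvx (fun j Hj => HL j (or_intror Hj)) (upd a i y)) as [By HBy].
      * intros a' Ha'. apply H. apply BndL_cons. rewrite upd_neq in Ha' by lia. eauto.
      * exists By. unfold Q1. intros a'' Ha''. rewrite !upd_neq in Ha'' by lia.
        assert (Ea : a'' (S V) = By).
        { destruct Ha'' as [H1 _]. rewrite H1; [apply upd_eq|].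
          intros Hin. assert (S V < V)%nat by (apply HL; simpl; auto). lia. }
        rewrite Ea. rewrite upd_neq in HBy by lia.
        destruct (HBy (upd a'' (S V) (upd a i y (S V)))) as [x [Hx1 Hx2]].
        -- destruct Ha'' as [H1 H2]. split.
           ++ intros j Hj. unfold upd at 1. destruct (Nat.eqb_spec j (S V)); subst; auto.
              rewrite H1; auto. apply upd_neq; auto.
           ++ intros j Hj. assert (j < V)%nat by (apply HL; simpl; auto).
              rewrite upd_neq by lia. auto.
        -- exists x. split; auto.
           refine (proj1 (Def_indep P V Q (upd (upd a'' (S V) (upd a i y (S V))) vx x) (upd a'' vx x) HD _) Hx2).
           intros j Hj. unfold upd.
           destruct (Nat.eqb j vx); auto. destruct (Nat.eqb_spec j (S V)); auto; lia.
    + exists Bs. intros a' Ha'.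
      assert (Hy : lep (a' i) (a V)) by (apply (proj2 Ha'); simpl; auto).
      destruct (HBs (a' i) Hy) as [B [HB1 HB2]].
      unfold Q1 in HB2. destruct (HB2 (upd a' (S V) B)) as [x [Hx1 Hx2]].
      * destruct Ha' as [H1 H2]. rewrite !upd_neq by lia. split.
        -- intros j Hj. unfold upd.
           destruct (Nat.eqb_spec j (S V)); auto.
           destruct (Nat.eqb_spec j i); subst; auto.
           apply H1. simpl. intros [E|E]; [congruence|auto].
        -- intros j Hj. assert (j < V)%nat by (apply HL; simpl; auto).
           rewrite upd_neq by lia. apply H2; simpl; auto.
      * exists x. rewrite upd_eq in Hx1. split.
        -- apply lep_trans with B; auto.
        -- refine (proj1 (Def_indep P V Q (upd (upd a' (S V) B) vx x) (upd a' vx x) HD _) Hx2).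
           intros j Hj. unfold upd.
           destruct (Nat.eqb j vx); auto. destruct (Nat.eqb_spec j (S V)); auto; lia.
Qed.

Definition Lg (K n : nat) : list nat := filter (fun i => negb (Nat.eqb i n)) (seq 0 K).

Lemma Lg_In K n m : In m (Lg K n) <-> (m < K)%nat /\ m <> n.
Proof.
  unfold Lg. rewrite filter_In, in_seq. destruct (Nat.eqb_spec m n); simpl; split; intros H; try lia; try tauto;
  destruct H; try congruence; try lia.
Qed.

Lemma Lg_NoDup K n : NoDup (Lg K n).
Proof. unfold Lg. apply NoDup_filter, seq_NoDup. Qed.

Definition Lp (K n : nat) := map (fun i => (i, K)) (Lg K n).

Lemma Lp_okl K n : okl K (Lp K n).
Proof.
  intros pr Hpr. unfold Lp in Hpr. apply in_map_iff in Hpr. destruct Hpr as [i [<- Hi]].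
  apply Lg_In in Hi. simpl; lia.
Qed.

Lemma Lp_fst K n : map fst (Lp K n) = Lg K n.
Proof. unfold Lp. rewrite map_map. simpl. apply map_id. Qed.

Definition cterm (K n : nat) := TMeet (TVar n) (TJoin (TVar (S K)) (TVar K)).

Definition cbody (K n : nat) (p : formula) :=
  FAdd (FSup n p) (FScale (-1) (FSup n (fsubst n (cterm K n) p))).

Definition clhs (K n : nat) (p : formula) :=
  FSup K (FInf (S K) (bsupP (Lp K n) (cbody K n p))).

Definition ccond K n p := Cond (clhs K n p) (FScale 0 FOne).

Lemma cbody_bound K n p y : good K p -> (n < K)%nat -> bound_in y (cbody K n p) -> (y < K)%nat.
Proof.
  intros Hg Hn H. simpl in H. rewrite bound_in_fsubst in H.
  destruct H as [[->|H]|[->|H]]; auto; eapply good_bound; eauto.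
Qed.

Lemma csub_eval (X : Lstruct) K n p (a : nat -> X) : good K p -> (n < K)%nat ->
  eval X a (FSup n (fsubst n (cterm K n) p)) =
  Rsup (fun r => exists y, r = eval X (upd a n (mt y (jn (a (S K)) (a K)))) p).
Proof.
  intros Hg Hn. simpl. apply Rsup_fextT. intros y.
  rewrite fsubst_eval.
  - simpl. rewrite upd_eq, upd_upd, !upd_neq by lia. auto.
  - intros z Hz Hne Hb. apply (good_bound K p z Hg) in Hb. simpl in Hz. lia.
Qed.

Lemma free_bsupP m l body : free_in m (bsupP l body) ->
  (free_in m body /\ ~ In m (map fst l)) \/ exists pr, In pr l /\ m = snd pr.
Proof.
  induction l as [|[i k] l IH]; simpl; intros H.
  - left; auto.
  - unfold BSup in H. simpl in H. destruct H as [H1 H2].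
    apply free_in_fsubst in H2. destruct H2 as [[H2 _]|H2].
    + apply IH in H2. destruct H2 as [[H2 H3]|[pr [H2 H3]]].
      * left. split; auto. intros [E|E]; auto.
      * right. exists pr; auto.
    + simpl in H2. destruct H2 as [H2|H2]; [congruence|]. right. exists (i,k); auto.
Qed.

Lemma ccond_closed K n p : good K p -> (n < K)%nat -> closed_condition (ccond K n p).
Proof.
  intros Hg Hn. split; intros m Hm; simpl in Hm; try tauto.
  unfold clhs in Hm. simpl in Hm. destruct Hm as [H1 [H2 H3]].
  apply free_bsupP in H3. destruct H3 as [[H3 H4]|[pr [H3 H4]]].
  - rewrite Lp_fst in H4. simpl in H3.
    assert (Hm : (m < K)%nat /\ m <> n \/ m = K \/ m = S K).
    { destruct H3 as [[H3 H5]|[H3 H5]].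
      - left. split; auto. eapply good_free; eauto.
      - apply free_in_fsubst in H5. destruct H5 as [[H5 H6]|H5].
        + left. split; auto. eapply good_free; eauto.
        + simpl in H5. lia. }
    destruct Hm as [Hm|Hm]; [apply H4, Lg_In; auto| lia].
  - unfold Lp in H3. apply in_map_iff in H3. destruct H3 as [i [<- _]]. simpl in H4. lia.
Qed.

Lemma sup_upd_same (X : Lstruct) a n p (x : X) : eval X (upd a n x) (FSup n p) = eval X a (FSup n p).
Proof. simpl. apply Rsup_fextT. intros y. rewrite upd_upd. auto. Qed.

Lemma PA_jn_ge P (HP : PAmodel P) (x y : P) : lep x (jn x y).
Proof.
  destruct (classic (lep x y)) as [H|H].
  - rewrite (proj2 (PA_lemt P HP _ _ H)); auto.
  - rewrite (proj2 (PA_nlemt P HP _ _ H)); apply lep_refl; auto.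
Qed.

Lemma ccond_PA K n p : good K p -> (n < K)%nat ->
  forall (P : Lstruct) (a : nat -> P), PAmodel P -> sat P a (ccond K n p).
Proof.
  intros Hg Hn P a HP. unfold sat, ccond. simpl lhs. simpl rhs.
  replace (eval P a (FScale 0 FOne)) with 0 by (simpl; ring).
  unfold clhs. apply sup_le_eval. intros b. simpl.
  set (a1 := upd a K b).
  pose (Q := fun a0 : nat -> P => eval P a0 p = eval P a0 (FSup n p)).
  assert (HDQ : Def P K Q).
  { apply Def_ext with (fun a0 => exists u, In u (vals p) /\ (eval P a0 p = u /\ eval P a0 (FSup n p) = u)).
    - apply (Def_finex P K (vals p) (fun u a0 => eval P a0 p = u /\ eval P a0 (FSup n p) = u)).
      intros u. apply Def_and; apply Def_eval; simpl; auto.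
    - intros a0. unfold Q. split; [intros [u [_ [H1 H2]]]; congruence|].
      intros H. exists (eval P a0 p). split; [apply vals_in; auto|auto]. }
  destruct (collL P HP K Q n (Lg K n) HDQ Hn) with (a := a1) as [B0 HB0].
  { intros j Hj. apply Lg_In in Hj. lia. }
  { intros a' _. destruct (PA_sup_att P HP a' n p) as [x Hx]. exists x. unfold Q.
    rewrite sup_upd_same. auto. }
  eapply Rle_trans.
  { apply (inf_lb_gen P (fun B => eval P (upd a1 (S K) B) (bsupP (Lp K n) (cbody K n p))) (bsupP (Lp K n) (cbody K n p)) B0).
    intros; eexists; eauto. }
  apply (bsupP_le P (PA_mt_le P HP) K); auto.
  { apply Lp_okl. }
  { intros z Hz. eapply cbody_bound; eauto. }
  { rewrite Lp_fst. apply Lg_NoDup. }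
  intros a' H1 H2. rewrite Lp_fst in H1.
  assert (HaK : a' K = b).
  { rewrite H1. unfold a1. rewrite upd_neq by lia. apply upd_eq. rewrite Lg_In. lia. }
  assert (HaSK : a' (S K) = B0).
  { rewrite H1. apply upd_eq. rewrite Lg_In. lia. }
  destruct (HB0 (upd a' (S K) (a1 (S K)))) as [x [Hx1 Hx2]].
  { split.
    - intros j Hj. unfold upd at 1. destruct (Nat.eqb_spec j (S K)); subst; auto.
      rewrite H1 by auto. apply upd_neq; auto.
    - intros j Hj. unfold a1. rewrite upd_eq. rewrite upd_neq by (apply Lg_In in Hj; lia).
      apply le_lep; auto. pose proof (H2 (j, K)) as H3. simpl in H3. unfold a1 in H3. rewrite upd_neq, upd_eq in H3 by lia. apply H3.
      unfold Lp. apply in_map_iff. exists j; auto. }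
  unfold Q in Hx2. rewrite sup_upd_same in Hx2.
  assert (E1 : eval P (upd (upd a' (S K) (a1 (S K))) n x) p = eval P (upd a' n x) p).
  { apply good_ext with K; auto. intros j Hj. unfold upd. destruct (Nat.eqb j n); auto.
    destruct (Nat.eqb_spec j (S K)); auto; lia. }
  assert (E2 : eval P (upd a' (S K) (a1 (S K))) (FSup n p) = eval P a' (FSup n p)).
  { apply good_ext with K; simpl; auto. intros j Hj. apply upd_neq. lia. }
  rewrite E1, E2 in Hx2.
  change (eval P a' (cbody K n p)) with (eval P a' (FSup n p) + -1 * eval P a' (FSup n (fsubst n (cterm K n) p))).
  rewrite csub_eval; auto. rewrite HaK, HaSK.
  assert (eval P (upd a' n x) p <= Rsup (fun r => exists y, r = eval P (upd a' n (mt y (jn B0 b))) p)).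
  { replace (eval P (upd a' n x) p) with (eval P (upd a' n (mt x (jn B0 b))) p).
    - apply (sup_ub_gen P (fun y => eval P (upd a' n (mt y (jn B0 b))) p) p x). intros; eexists; eauto.
    - assert (Hl : lep x (jn B0 b)) by (apply lep_trans with B0; auto; apply PA_jn_ge; auto).
      rewrite (proj1 (PA_lemt P HP x (jn B0 b) Hl)); auto. }
  lra.
Qed.

Lemma M_coll (M : Lstruct) (HM : models_AA M) (HL : Lat M) K n p : good K p -> (n < K)%nat ->
  forall (b : M) eps, 0 < eps -> exists B, le b B /\
  forall g : nat -> M, (forall i, (i < K)%nat -> i <> n -> le (g i) b) ->
  eval M g (FSup n p) <= Rsup (fun r => exists y, r = eval M (upd g n (mt y B)) p) + eps.
Proof.
  intros Hg Hn b eps Heps.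
  assert (HAA : AA (ccond K n p)) by (split; [apply ccond_closed; auto| intros; apply ccond_PA; auto]).
  pose (a := fun _ : nat => (zr : M)).
  pose proof (HM _ HAA a) as H. unfold sat, ccond in H. simpl lhs in H. simpl rhs in H.
  replace (eval M a (FScale 0 FOne)) with 0 in H by (simpl; ring).
  unfold clhs in H.
  set (F := fun B => eval M (upd (upd a K b) (S K) B) (bsupP (Lp K n) (cbody K n p))).
  assert (HF : Rinf (fun r => exists B, r = F B) <= 0).
  { eapply Rle_trans; [|apply H].
    apply (sup_ub_gen M (fun b0 => eval M (upd a K b0) (FInf (S K) (bsupP (Lp K n) (cbody K n p)))) (FInf (S K) (bsupP (Lp K n) (cbody K n p))) b).
    intros y. eexists; eauto. }
  destruct (Rinf_lt (fun r => exists B, r = F B) (- fbd (bsupP (Lp K n) (cbody K n p))) eps (F zr)) as [s [[B0 ->] HB0]].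
  { intros s [B ->]. apply eval_lb. }
  { exists zr; auto. }
  { lra. }
  exists (jn B0 b). split; [apply le_jn_r; auto|].
  intros g Hgb.
  set (a2 := upd (upd a K b) (S K) B0).
  set (a' := fun j => if Nat.ltb j K then (if Nat.eqb j n then a2 n else g j) else a2 j).
  assert (Hbody : eval M a' (cbody K n p) <= F B0).
  { apply (bsupP_ge M K); auto.
    - apply Lp_okl.
    - intros z Hz. eapply cbody_bound; eauto.
    - rewrite Lp_fst. apply Lg_NoDup.
    - intros j Hj. rewrite Lp_fst, Lg_In in Hj. unfold a'.
      destruct (Nat.ltb_spec j K); auto. destruct (Nat.eqb_spec j n); subst; auto. tauto.
    - intros pr Hpr. unfold Lp in Hpr. apply in_map_iff in Hpr. destruct Hpr as [i [<- Hi]].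
      apply Lg_In in Hi. simpl. unfold a'. destruct (Nat.ltb_spec i K); [|lia].
      destruct (Nat.eqb_spec i n); [lia|]. unfold a2. rewrite upd_neq, upd_eq by lia. apply Hgb; tauto. }
  change (eval M a' (cbody K n p)) with (eval M a' (FSup n p) + -1 * eval M a' (FSup n (fsubst n (cterm K n) p))) in Hbody.
  rewrite csub_eval in Hbody; auto.
  assert (Ha'K : a' K = b) by (unfold a', a2; destruct (Nat.ltb_spec K K); [lia|]; rewrite upd_neq, upd_eq by lia; auto).
  assert (Ha'SK : a' (S K) = B0) by (unfold a', a2; destruct (Nat.ltb_spec (S K) K); [lia|]; rewrite upd_eq; auto).
  rewrite Ha'K, Ha'SK in Hbody.
  assert (Hag : forall y j, (j < K)%nat -> upd a' n y j = upd g n y j).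
  { intros y j Hj. unfold upd, a'. destruct (Nat.eqb_spec j n); auto.
    destruct (Nat.ltb_spec j K); [|lia]. destruct (Nat.eqb_spec j n); [lia|auto]. }
  assert (E1 : eval M a' (FSup n p) = eval M g (FSup n p)).
  { simpl. apply Rsup_fextT. intros y. apply good_ext with K; auto. }
  assert (E2 : Rsup (fun r => exists y, r = eval M (upd a' n (mt y (jn B0 b))) p) =
               Rsup (fun r => exists y, r = eval M (upd g n (mt y (jn B0 b))) p)).
  { apply Rsup_fextT. intros y. apply good_ext with K; auto. }
  rewrite E1, E2 in Hbody. lra.
Qed.

Definition leK {X : Lstruct} (K : nat) (b : X) (g : nat -> X) : Prop :=
  forall i, (i < K)%nat -> le (g i) b.

Definition Up (M N : Lstruct) (f : embedding M N) K p o : Prop :=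
  forall (s : bool) (b : M) eps, 0 < eps -> exists h : nat -> M,
  (forall g : nat -> N, leK K (f b) g ->
     eval N g p <= eval N (merge K g (fun j => f (h j))) (bnd K s o p) + eps) /\
  (forall g : nat -> M, leK K b g -> eval M (merge K g h) (bnd K s o p) <= eval M g p + eps).

Definition Lo (M N : Lstruct) (f : embedding M N) K p o : Prop :=
  forall (s : bool) (b : M) eps, 0 < eps -> exists h : nat -> M,
  (forall g : nat -> N, leK K (f b) g ->
     eval N (merge K g (fun j => f (h j))) (bnd K s o p) <= eval N g p + eps) /\
  (forall g : nat -> M, leK K b g -> eval M g p <= eval M (merge K g h) (bnd K s o p) + eps).

Definition Elem (M N : Lstruct) (f : embedding M N) p : Prop :=
  forall g : nat -> M, eval M g p = eval N (fun j => f (g j)) p.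

Lemma transfer_bnd (M N : Lstruct) (f : embedding M N) K s o p (g h : nat -> M) :
  Sigma0_elementary f -> good K p ->
  eval M (merge K g h) (bnd K s o p) = eval N (merge K (fun j => f (g j)) (fun j => f (h j))) (bnd K s o p).
Proof.
  intros Hs Hg. rewrite (Hs _ (Sigma0_bnd K s p o Hg)). rewrite merge_emb. auto.
Qed.

Fixpoint bj {M : Lstruct} (g : nat -> M) (k : nat) : M :=
  match k with O => zr | S k => jn (g k) (bj g k) end.

Lemma bj_le (M : Lstruct) (HL : Lat M) (g : nat -> M) k : forall i, (i < k)%nat -> le (g i) (bj g k).
Proof.
  induction k; intros i Hi; [lia|]. simpl. destruct (Nat.eq_dec i k) as [->|Hne].
  - apply le_jn_l; auto.
  - apply le_trans' with (bj g k); auto. apply IHk; lia. apply le_jn_r; auto.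
Qed.

Lemma leK_emb (M N : Lstruct) (f : embedding M N) K (b : M) (g : nat -> M) :
  leK K b g -> leK K (f b) (fun j => f (g j)).
Proof. intros H i Hi. apply emb_le; auto. Qed.

Lemma Elem_of (M N : Lstruct) (f : embedding M N) (HLM : Lat M) K p o :
  Sigma0_elementary f -> good K p -> Up M N f K p o -> Lo M N f K p o -> Elem M N f p.
Proof.
  intros Hs Hg HU HL g.
  assert (Hb : leK K (bj g K) g) by (intros i Hi; apply bj_le; auto).
  apply Rle_antisym; apply le_epsilon; intros eps Heps.
  - destruct (HL true (bj g K) (eps / 2) ltac:(lra)) as [h [H1 H2]].
    specialize (H2 g Hb). specialize (H1 (fun j => f (g j)) (leK_emb M N f K _ _ Hb)).
    rewrite (transfer_bnd M N f) in H2; auto. lra.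
  - destruct (HU true (bj g K) (eps / 2) ltac:(lra)) as [h [H1 H2]].
    specialize (H2 g Hb). specialize (H1 (fun j => f (g j)) (leK_emb M N f K _ _ Hb)).
    rewrite (transfer_bnd M N f) in H2; auto. lra.
Qed.

Lemma bnd_dep_merge (X : Lstruct) K s o p (g h1 h2 : nat -> X) : good K p ->
  (forall j, (o <= j < o + sz p)%nat -> h1 (pv K s j) = h2 (pv K s j)) ->
  eval X (merge K g h1) (bnd K s o p) = eval X (merge K g h2) (bnd K s o p).
Proof.
  intros Hg H. apply bnd_dep; auto.
  - intros j Hj. rewrite !merge_lt; auto.
  - intros j Hj. rewrite !merge_ge by apply pv_ge. auto.
Qed.

Lemma good_merge (X : Lstruct) K p (g h : nat -> X) : good K p -> eval X (merge K g h) p = eval X g p.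
Proof. intros Hg. apply good_ext with K; auto. intros j Hj. apply merge_lt; auto. Qed.

Lemma scale_ineq r x y e : 0 <= e -> ((0 <= r /\ x <= y + e) \/ (r < 0 /\ y <= x + e)) ->
  r * x <= r * y + Rabs r * e.
Proof.
  intros He [[Hr H]|[Hr H]].
  - rewrite Rabs_right by lra. nra.
  - rewrite Rabs_left by lra. nra.
Qed.

Lemma small_scale r e : 0 < e -> Rabs r * (e / (Rabs r + 1)) <= e.
Proof.
  intros He. pose proof (Rabs_pos r).
  assert (e / (Rabs r + 1) * (Rabs r + 1) = e) by (field; lra).
  nra.
Qed.

Lemma pv_odd K t j : Nat.odd (pv K t j - K) = t.
Proof.
  unfold pv. replace (K + 2 * j + (if t then 1 else 0) - K)%nat with ((if t then 1 else 0) + 2 * j)%nat by lia.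
  rewrite Nat.odd_add_mul_2. destruct t; auto.
Qed.

Lemma UL_triv (M N : Lstruct) (f : embedding M N) K p o :
  good K p -> (forall s o, bnd K s o p = p) -> Up M N f K p o /\ Lo M N f K p o.
Proof.
  intros Hg Hb. split; intros s b eps Heps; exists (fun _ => zr); rewrite Hb; split; intros g _;
  rewrite good_merge; auto; lra.
Qed.

Lemma UL_add (M N : Lstruct) (f : embedding M N) K p1 p2 :
  good K p1 -> good K p2 ->
  (forall o, Up M N f K p1 o /\ Lo M N f K p1 o) ->
  (forall o, Up M N f K p2 o /\ Lo M N f K p2 o) ->
  forall o, Up M N f K (FAdd p1 p2) o /\ Lo M N f K (FAdd p1 p2) o.
Proof.
  intros Hg1 Hg2 IH1 IH2 o.
  assert (Hc : forall (X : Lstruct) s (g h1 h2 : nat -> X),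
     eval X (merge K g (fun j => if Nat.ltb j (pv K s (o + sz p1)) then h1 j else h2 j)) (bnd K s o (FAdd p1 p2)) =
     eval X (merge K g h1) (bnd K s o p1) + eval X (merge K g h2) (bnd K s (o + sz p1) p2)).
  { intros X s g h1 h2. simpl. f_equal.
    - apply bnd_dep_merge; auto. intros j Hj. destruct (Nat.ltb_spec (pv K s j) (pv K s (o + sz p1))); auto.
      unfold pv in *; lia.
    - apply bnd_dep_merge; auto. intros j Hj. destruct (Nat.ltb_spec (pv K s j) (pv K s (o + sz p1))); auto.
      unfold pv in *; destruct s; lia. }
  split; intros s b eps Heps.
  - destruct (proj1 (IH1 o) s b (eps/2) ltac:(lra)) as [h1 [H11 H12]].
    destruct (proj1 (IH2 (o + sz p1)%nat) s b (eps/2) ltac:(lra)) as [h2 [H21 H22]].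
    exists (fun j => if Nat.ltb j (pv K s (o + sz p1)) then h1 j else h2 j). split.
    + intros g Hgb. pose proof (Hc N s g (fun j => f (h1 j)) (fun j => f (h2 j))) as E.
      replace (fun j => f (if Nat.ltb j (pv K s (o + sz p1)) then h1 j else h2 j)) with
              (fun j => if Nat.ltb j (pv K s (o + sz p1)) then f (h1 j) else f (h2 j))
        by (extensionality j; destruct (Nat.ltb j _); auto).
      rewrite E. simpl. specialize (H11 g Hgb). specialize (H21 g Hgb). lra.
    + intros g Hgb. rewrite Hc. simpl. specialize (H12 g Hgb). specialize (H22 g Hgb). lra.
  - destruct (proj2 (IH1 o) s b (eps/2) ltac:(lra)) as [h1 [H11 H12]].
    destruct (proj2 (IH2 (o + sz p1)%nat) s b (eps/2) ltac:(lra)) as [h2 [H21 H22]].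
    exists (fun j => if Nat.ltb j (pv K s (o + sz p1)) then h1 j else h2 j). split.
    + intros g Hgb. pose proof (Hc N s g (fun j => f (h1 j)) (fun j => f (h2 j))) as E.
      replace (fun j => f (if Nat.ltb j (pv K s (o + sz p1)) then h1 j else h2 j)) with
              (fun j => if Nat.ltb j (pv K s (o + sz p1)) then f (h1 j) else f (h2 j))
        by (extensionality j; destruct (Nat.ltb j _); auto).
      rewrite E. simpl. specialize (H11 g Hgb). specialize (H21 g Hgb). lra.
    + intros g Hgb. rewrite Hc. simpl. specialize (H12 g Hgb). specialize (H22 g Hgb). lra.
Qed.

Lemma UL_scale (M N : Lstruct) (f : embedding M N) K r p :
  good K p -> (forall o, Up M N f K p o /\ Lo M N f K p o) ->
  forall o, Up M N f K (FScale r p) o /\ Lo M N f K (FScale r p) o.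
Proof.
  intros Hg IH o. pose proof (Rabs_pos r) as Hr.
  split; intros s b eps Heps; set (e := eps / (Rabs r + 1));
  assert (He : 0 < e) by (unfold e; apply Rdiv_lt_0_compat; lra);
  pose proof (small_scale r eps Heps) as Hs; fold e in Hs;
  destruct (Rle_lt_dec 0 r) as [Hr0|Hr0].
  - destruct (proj1 (IH o) s b e He) as [h [H1 H2]]. exists h. simpl. split.
    + intros g Hgb. specialize (H1 g Hgb).
      pose proof (scale_ineq r _ _ e ltac:(lra) (or_introl (conj Hr0 H1))). lra.
    + intros g Hgb. specialize (H2 g Hgb).
      pose proof (scale_ineq r _ _ e ltac:(lra) (or_introl (conj Hr0 H2))). lra.
  - destruct (proj2 (IH o) s b e He) as [h [H1 H2]]. exists h. simpl. split.
    + intros g Hgb. specialize (H1 g Hgb).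
      pose proof (scale_ineq r _ _ e ltac:(lra) (or_intror (conj Hr0 H1))). lra.
    + intros g Hgb. specialize (H2 g Hgb).
      pose proof (scale_ineq r _ _ e ltac:(lra) (or_intror (conj Hr0 H2))). lra.
  - destruct (proj2 (IH o) s b e He) as [h [H1 H2]]. exists h. simpl. split.
    + intros g Hgb. specialize (H1 g Hgb).
      pose proof (scale_ineq r _ _ e ltac:(lra) (or_introl (conj Hr0 H1))). lra.
    + intros g Hgb. specialize (H2 g Hgb).
      pose proof (scale_ineq r _ _ e ltac:(lra) (or_introl (conj Hr0 H2))). lra.
  - destruct (proj1 (IH o) s b e He) as [h [H1 H2]]. exists h. simpl. split.
    + intros g Hgb. specialize (H1 g Hgb).
      pose proof (scale_ineq r _ _ e ltac:(lra) (or_intror (conj Hr0 H1))). lra.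
    + intros g Hgb. specialize (H2 g Hgb).
      pose proof (scale_ineq r _ _ e ltac:(lra) (or_intror (conj Hr0 H2))). lra.
Qed.

Lemma sigma_eval (X : Lstruct) K s o n p (g hh : nat -> X) : good K (FSup n p) ->
  eval X (merge K g hh) (bnd K s o (FSup n p)) =
  Rsup (fun r => exists y, r = eval X (merge K (upd g n (mt y (hh (pv K s o)))) hh) (bnd K s (S o) p)).
Proof.
  intros Hg. rewrite bnd_sup_eval; auto. rewrite merge_ge by apply pv_ge.
  apply Rsup_fextT. intros y. rewrite merge_upd; auto. destruct Hg; auto.
Qed.

Lemma sigma_eval2 (X : Lstruct) K s o n p (g h : nat -> X) B : good K (FSup n p) ->
  eval X (merge K g (upd h (pv K s o) B)) (bnd K s o (FSup n p)) =
  Rsup (fun r => exists y, r = eval X (merge K (upd g n (mt y B)) h) (bnd K s (S o) p)).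
Proof.
  intros Hg. rewrite sigma_eval; auto. rewrite upd_eq. apply Rsup_fextT. intros y.
  apply bnd_dep_merge; [destruct Hg; auto|]. intros j Hj. apply upd_neq.
  intro E. apply pv_inj in E. lia.
Qed.

Lemma fupd (M N : Lstruct) (f : embedding M N) (h : nat -> M) k B :
  (fun j => f (upd h k B j)) = upd (fun j => f (h j)) k (f B).
Proof. apply femb_upd. Qed.

Lemma leK_upd (X : Lstruct) (HL : Lat X) K (g : nat -> X) n (b B : X) y :
  (forall i, (i < K)%nat -> i <> n -> le (g i) b) -> le b B -> leK K B (upd g n (mt y B)).
Proof.
  intros H1 H2 i Hi. unfold upd. destruct (Nat.eqb_spec i n).
  - apply le_mt; auto.
  - apply le_trans' with b; auto.
Qed.

Lemma Lo_sup (M N : Lstruct) (f : embedding M N) (HLM : Lat M) (HLN : Lat N) (HAA : models_AA M) K n p :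
  good K (FSup n p) -> (forall o, Up M N f K p o /\ Lo M N f K p o) ->
  forall o, Lo M N f K (FSup n p) o.
Proof.
  intros Hg IH o s b eps Heps. pose proof Hg as [Hn Hgp].
  destruct (M_coll M HAA HLM K n p Hgp Hn b (eps/2) ltac:(lra)) as [B [HbB HB]].
  destruct (proj2 (IH (S o)) s B (eps/2) ltac:(lra)) as [hl [Hl1 Hl2]].
  exists (upd hl (pv K s o) B). split.
  - intros g Hgb. rewrite fupd. rewrite sigma_eval2; auto.
    apply sup_le. intros y. eapply Rle_trans.
    + apply Hl1. apply (leK_upd N HLN K g n (f b)).
      * intros i Hi _. apply Hgb; auto.
      * apply emb_le; auto.
    + pose proof (sup_ub_eval N g n p (mt y (f B))). lra.
  - intros g Hgb. rewrite sigma_eval2; auto.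
    eapply Rle_trans; [apply HB; intros i Hi _; apply Hgb; auto|].
    assert (Rsup (fun r => exists y, r = eval M (upd g n (mt y B)) p) <=
            Rsup (fun r => exists y, r = eval M (merge K (upd g n (mt y B)) hl) (bnd K s (S o) p)) + eps/2).
    { apply sup_le. intros y. eapply Rle_trans.
      - apply Hl2. apply (leK_upd M HLM K g n b); [intros i Hi _; apply Hgb; auto | auto].
      - apply Rplus_le_compat_r.
        apply (sup_ub_gen M (fun y0 => eval M (merge K (upd g n (mt y0 B)) hl) (bnd K s (S o) p)) (bnd K s (S o) p) y).
        intros; eexists; eauto. }
    lra.
Qed.

Lemma negb_neq (s : bool) : negb s <> s.
Proof. destruct s; discriminate. Qed.

Lemma Up_sup (M N : Lstruct) (f : embedding M N) (HLM : Lat M) (HLN : Lat N) (HAA : models_AA M)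
  (Hs0 : Sigma0_elementary f) (Hcof : cofinal f) K n p :
  good K (FSup n p) -> (forall o, Up M N f K p o /\ Lo M N f K p o) ->
  forall o, Up M N f K (FSup n p) o.
Proof.
  intros Hg IH o s b eps Heps. pose proof Hg as [Hn Hgp].
  set (e1 := eps / 4). assert (He1 : 0 < e1) by (unfold e1; lra).
  assert (HElem : Elem M N f p) by (apply (Elem_of M N f HLM K p 0); auto; apply IH).
  destruct (M_coll M HAA HLM K n p Hgp Hn b e1 He1) as [B [HbB HB]].
  destruct (proj1 (IH (S o)) s B e1 He1) as [ht [Ht1 Ht2]].
  exists (upd ht (pv K s o) B). split.
  2:{ intros g Hgb. rewrite sigma_eval2; auto. apply sup_le. intros y.
      eapply Rle_trans; [apply Ht2; apply (leK_upd M HLM K g n b); [intros i Hi _; apply Hgb; auto|auto]|].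
      pose proof (sup_ub_eval M g n p (mt y B)). unfold e1 in *. lra. }
  intros g Hgb. rewrite fupd.
  apply sup_le_eval. intros x.
  destruct (Hcof x) as [b' Hxb'].
  set (b2 := jn b b').
  destruct (proj1 (IH (S o)) (negb s) b2 e1 He1) as [h2 [Hu1 Hu2]].
  assert (Hpx : eval N (upd g n x) p <=
                eval N (merge K (upd g n x) (fun j => f (h2 j))) (bnd K (negb s) (S o) p) + e1).
  { apply Hu1. intros i Hi. unfold upd. destruct (Nat.eqb_spec i n).
    - apply le_trans' with (f b'); auto. apply emb_le, le_jn_r; auto.
    - apply le_trans' with (f b); auto. apply emb_le, le_jn_l; auto. }
  set (J := (S o + sz p)%nat).
  set (kb := pv K s J). set (kb' := pv K (negb s) J).
  set (H := fun j => if Nat.eqb j kb then b else if Nat.eqb j kb' then b'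
                     else if Bool.eqb (Nat.odd (j - K)) s then upd ht (pv K s o) B j else h2 j).
  assert (HHs : forall j, (o <= j < J)%nat -> H (pv K s j) = upd ht (pv K s o) B (pv K s j)).
  { intros j Hj. unfold H. destruct (Nat.eqb_spec (pv K s j) kb) as [E|E].
    { apply pv_inj in E. lia. }
    destruct (Nat.eqb_spec (pv K s j) kb') as [E'|E'].
    { apply pv_inj in E'. destruct E' as [E' _]. symmetry in E'. apply negb_neq in E'. tauto. }
    rewrite pv_odd, eqb_reflx. auto. }
  assert (HHn : forall j, (S o <= j < J)%nat -> H (pv K (negb s) j) = h2 (pv K (negb s) j)).
  { intros j Hj. unfold H. destruct (Nat.eqb_spec (pv K (negb s) j) kb) as [E|E].
    { apply pv_inj in E. destruct E as [E _]. apply negb_neq in E. tauto. }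
    destruct (Nat.eqb_spec (pv K (negb s) j) kb') as [E'|E'].
    { apply pv_inj in E'. lia. }
    rewrite pv_odd. destruct s; auto. }
  assert (Hkb : H kb = b) by (unfold H; rewrite Nat.eqb_refl; auto).
  assert (Hkb' : H kb' = b').
  { unfold H. destruct (Nat.eqb_spec kb' kb) as [E|E]; [|rewrite Nat.eqb_refl; auto].
    unfold kb, kb' in E. apply pv_inj in E. destruct E as [E _]. apply negb_neq in E. tauto. }
  assert (HkK : (K <= kb)%nat) by apply pv_ge.
  assert (HkK' : (K <= kb')%nat) by apply pv_ge.
  set (lst := (n, kb') :: map (fun i => (i, kb)) (Lg K n)).
  set (body := FAdd (bnd K (negb s) (S o) p) (FScale (-1) (bnd K s o (FSup n p)))).
  assert (Hokl : okl K lst).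
  { intros pr [<-|Hpr]; simpl; [lia|]. apply in_map_iff in Hpr. destruct Hpr as [i [<- Hi]].
    apply Lg_In in Hi. simpl. lia. }
  assert (Hfst : map fst lst = n :: Lg K n).
  { unfold lst. simpl. f_equal. rewrite map_map. simpl. apply map_id. }
  assert (HND : NoDup (map fst lst)).
  { rewrite Hfst. constructor; [rewrite Lg_In; lia| apply Lg_NoDup]. }
  assert (Hfst' : forall j, ~ In j (map fst lst) -> (K <= j)%nat).
  { intros j Hj. rewrite Hfst in Hj. destruct (Nat.lt_ge_cases j K); auto.
    exfalso. apply Hj. destruct (Nat.eq_dec j n); [left; auto|right; apply Lg_In; auto]. }
  assert (Hbb : forall z, bound_in z body -> (z < K)%nat).
  { intros z Hz. unfold body in Hz. destruct Hz as [Hz|Hz].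
    - eapply bnd_bound; eauto.
    - eapply (bnd_bound K s (FSup n p)); eauto. }
  assert (HS0D : Sigma0 (bsupP lst body)).
  { apply (bsupP_Sigma0 K); auto. constructor; [|constructor]; apply Sigma0_bnd; auto. }
  set (z0 := fun _ : nat => (zr : M)).
  assert (HDM : eval M (merge K z0 H) (bsupP lst body) <= 3 * e1).
  { apply (bsupP_le M (le_mt M HLM) K lst body); auto. intros a' H1 H2.
    assert (Ha'H : forall j, (K <= j)%nat -> a' j = H j).
    { intros j Hj. destruct (in_dec Nat.eq_dec j (map fst lst)) as [Hin|Hin].
      - rewrite Hfst in Hin. destruct Hin as [<-|Hin]; [lia|]. apply Lg_In in Hin. lia.
      - rewrite H1 by auto. apply merge_ge; auto. }
    assert (Han : le (a' n) b').
    { pose proof (H2 (n, kb') (or_introl eq_refl)) as H3. simpl in H3. rewrite merge_ge in H3 by auto.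
      rewrite Hkb' in H3. auto. }
    assert (Hai : forall i, (i < K)%nat -> i <> n -> le (a' i) b).
    { intros i Hi Hin. assert (In (i, kb) lst).
      { right. apply in_map_iff. exists i. split; auto. apply Lg_In; auto. }
      pose proof (H2 _ H0) as H3. simpl in H3. rewrite merge_ge in H3 by auto. rewrite Hkb in H3. auto. }
    assert (E1 : eval M a' (bnd K (negb s) (S o) p) = eval M (merge K a' h2) (bnd K (negb s) (S o) p)).
    { apply bnd_dep; auto.
      - intros j Hj. rewrite merge_lt; auto.
      - intros j Hj. rewrite merge_ge by apply pv_ge. rewrite Ha'H by apply pv_ge. apply HHn. unfold J. lia. }
    assert (E2 : eval M a' (bnd K s o (FSup n p)) = eval M (merge K a' (upd ht (pv K s o) B)) (bnd K s o (FSup n p))).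
    { apply bnd_dep; auto.
      - intros j Hj. rewrite merge_lt; auto.
      - intros j Hj. rewrite merge_ge by apply pv_ge. rewrite Ha'H by apply pv_ge. apply HHs. unfold J. simpl in Hj. lia. }
    assert (Hb2 : leK K b2 a').
    { intros i Hi. destruct (Nat.eq_dec i n) as [->|Hin].
      - apply le_trans' with b'; auto. apply le_jn_r; auto.
      - apply le_trans' with b; auto. apply le_jn_l; auto. }
    pose proof (Hu2 a' Hb2) as T1.
    assert (T2 : forall y, eval M (upd a' n (mt y B)) p <=
                   eval M (merge K (upd a' n (mt y B)) ht) (bnd K s (S o) p) + e1).
    { intros y. assert (Hl : leK K B (upd a' n (mt y B))) by (apply (leK_upd M HLM K a' n b); auto).
      pose proof (Ht1 _ (leK_emb M N f K B _ Hl)) as T. rewrite <- HElem in T.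
      rewrite <- merge_emb in T. rewrite <- Hs0 in T by (apply Sigma0_bnd; auto). auto. }
    assert (T3 : Rsup (fun r => exists y, r = eval M (upd a' n (mt y B)) p) <=
                 eval M (merge K a' (upd ht (pv K s o) B)) (bnd K s o (FSup n p)) + e1).
    { rewrite sigma_eval2; auto. apply sup_le. intros y. eapply Rle_trans; [apply T2|].
      apply Rplus_le_compat_r.
      apply (sup_ub_gen M (fun y0 => eval M (merge K (upd a' n (mt y0 B)) ht) (bnd K s (S o) p)) (bnd K s (S o) p) y).
      intros; eexists; eauto. }
    pose proof (HB a' Hai) as T4.
    pose proof (sup_ub_eval M a' n p (a' n)) as T5. rewrite upd_same in T5.
    change (eval M a' body) with (eval M a' (bnd K (negb s) (S o) p) + -1 * eval M a' (bnd K s o (FSup n p))).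
    rewrite E1, E2. lra. }
  assert (HDN : eval N (fun j => f (merge K z0 H j)) (bsupP lst body) <= 3 * e1).
  { rewrite <- Hs0; auto. }
  assert (HgeN : eval N (merge K (upd g n x) (fun j => f (H j))) body <=
                 eval N (fun j => f (merge K z0 H j)) (bsupP lst body)).
  { apply (bsupP_ge N K lst body); auto.
    - intros j Hj. apply Hfst' in Hj. rewrite !merge_ge; auto.
    - intros pr [<-|Hpr]; simpl.
      + rewrite merge_lt, upd_eq by auto. rewrite merge_ge by auto. rewrite Hkb'. auto.
      + apply in_map_iff in Hpr. destruct Hpr as [i [<- Hi]]. apply Lg_In in Hi. simpl.
        rewrite merge_lt by lia. rewrite upd_neq by lia. rewrite merge_ge by auto. rewrite Hkb.
        apply Hgb; lia. }
  assert (EN1 : eval N (merge K (upd g n x) (fun j => f (H j))) (bnd K (negb s) (S o) p) =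
                eval N (merge K (upd g n x) (fun j => f (h2 j))) (bnd K (negb s) (S o) p)).
  { apply bnd_dep_merge; auto. intros j Hj. assert (S o <= j < J)%nat by (unfold J; lia). rewrite HHn; auto. }
  assert (EN2 : eval N (merge K (upd g n x) (fun j => f (H j))) (bnd K s o (FSup n p)) =
                eval N (merge K g (upd (fun j => f (ht j)) (pv K s o) (f B))) (bnd K s o (FSup n p))).
  { rewrite (bnd_dep_merge N K s o (FSup n p) (upd g n x) (fun j => f (H j)) (upd (fun j => f (ht j)) (pv K s o) (f B))); auto.
    - rewrite merge_upd by auto. apply bnd_sup_upd; auto.
    - intros j Hj. rewrite HHs by (unfold J; simpl in Hj; lia). rewrite <- fupd. auto. }
  change (eval N (merge K (upd g n x) (fun j => f (H j))) body) with
    (eval N (merge K (upd g n x) (fun j => f (H j))) (bnd K (negb s) (S o) p) +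
     -1 * eval N (merge K (upd g n x) (fun j => f (H j))) (bnd K s o (FSup n p))) in HgeN.
  rewrite EN1, EN2 in HgeN. unfold e1 in *. lra.
Qed.

Lemma UL_all (M N : Lstruct) (f : embedding M N) (HLM : Lat M) (HLN : Lat N) (HAA : models_AA M)
  (Hs0 : Sigma0_elementary f) (Hcof : cofinal f) K p :
  good K p -> forall o, Up M N f K p o /\ Lo M N f K p o.
Proof.
  induction p; intros Hg o.
  - apply UL_triv; auto.
  - apply UL_triv; auto.
  - destruct Hg. apply UL_add; auto.
  - apply UL_scale; auto.
  - pose proof Hg as [Hn Hgp]. split.
    + apply Up_sup; auto.
    + apply Lo_sup; auto.
  - destruct Hg.
Qed.

Fixpoint ei (p : formula) : formula :=
  match p with
  | FOne => FOne
  | FDist t1 t2 => FDist t1 t2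
  | FAdd p q => FAdd (ei p) (ei q)
  | FScale r p => FScale r (ei p)
  | FSup n p => FSup n (ei p)
  | FInf n p => FScale (-1) (FSup n (FScale (-1) (ei p)))
  end.

Lemma ei_eval (X : Lstruct) p : forall a, eval X a (ei p) = eval X a p.
Proof.
  induction p; intros a; simpl; auto.
  - rewrite IHp1, IHp2; auto.
  - rewrite IHp; auto.
  - apply Rsup_fextT. intros y. auto.
  - rewrite (Rsup_fextT (fun x => -1 * eval X (upd a n x) (ei p)) (fun x => -1 * eval X (upd a n x) p))
      by (intros; rewrite IHp; auto).
    assert (Hub : forall x, -1 * eval X (upd a n x) p <= Rsup (fun r => exists y, r = -1 * eval X (upd a n y) p)).
    { intros x. apply (sup_ub X (fun y => -1 * eval X (upd a n y) p) (fbd p)). intros y.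
      pose proof (eval_lb X (upd a n y) p). lra. }
    assert (Hlb : forall x, Rinf (fun r => exists y, r = eval X (upd a n y) p) <= eval X (upd a n x) p).
    { intros x. apply (inf_lb X (fun y => eval X (upd a n y) p) (- fbd p)). intros y. apply eval_lb. }
    apply Rle_antisym.
    + apply inf_ge. intros x. specialize (Hub x). lra.
    + assert (Rsup (fun r => exists y, r = -1 * eval X (upd a n y) p) <= - Rinf (fun r => exists y, r = eval X (upd a n y) p)).
      { apply sup_le. intros x. specialize (Hlb x). lra. }
      lra.
Qed.

Lemma tgood_mono K K' t : (K <= K')%nat -> tgood K t -> tgood K' t.
Proof. intros HK. induction t; simpl; intuition lia. Qed.

Lemma tgood_ex t : exists K, tgood K t.
Proof.
  induction t; simpl.
  - exists (S n); lia.
  - exists 0%nat; auto.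
  - exists 0%nat; auto.
  all: destruct IHt1 as [K1 H1]; destruct IHt2 as [K2 H2]; exists (K1 + K2)%nat;
    split; [apply tgood_mono with K1|apply tgood_mono with K2]; auto; lia.
Qed.

Lemma ei_good p : exists K, good K (ei p).
Proof.
  induction p; simpl.
  - exists 0%nat; auto.
  - destruct (tgood_ex t1) as [K1 H1]. destruct (tgood_ex t2) as [K2 H2]. exists (K1 + K2)%nat.
    split; [apply tgood_mono with K1|apply tgood_mono with K2]; auto; lia.
  - destruct IHp1 as [K1 H1]. destruct IHp2 as [K2 H2]. exists (K1 + K2)%nat.
    split; [apply good_mono with K1|apply good_mono with K2]; auto; lia.
  - auto.
  - destruct IHp as [K1 H1]. exists (K1 + S n)%nat. split; [lia|]. apply good_mono with K1; auto; lia.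
  - destruct IHp as [K1 H1]. exists (K1 + S n)%nat. split; [lia|]. apply good_mono with K1; auto; lia.
Qed.

Lemma i_iii (M N : Lstruct) (f : embedding M N) :
  AA0 M -> AA0 N -> cofinal f -> models_AA M -> Sigma0_elementary f -> elementary f.
Proof.
  intros H0M H0N Hcof HAA Hs p a.
  rewrite <- (ei_eval M p a), <- (ei_eval N p).
  destruct (ei_good p) as [K HK].
  pose proof (AA0_Lat M H0M) as HLM. pose proof (AA0_Lat N H0N) as HLN.
  destruct (UL_all M N f HLM HLN HAA Hs Hcof K (ei p) HK 0) as [HU HL].
  apply (Elem_of M N f HLM K (ei p) 0); auto.
Qed.

Theorem mainTheorem14 :
  affine_MRDP ->
  forall (M N : Lstruct) (f : embedding M N),
    AA0 M -> AA0 N -> cofinal f -> models_AA M ->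
    (Sigma0_elementary f <-> models_AA N) /\ (models_AA N <-> elementary f).
Proof.
  intros HMR M N f H0M H0N Hcof HAA. split; split; intros H.
  - apply (iii_ii M N f); auto. apply i_iii; auto.
  - apply ii_i; auto.
  - apply i_iii; auto. apply ii_i; auto.
  - apply (iii_ii M N f); auto.
Qed.
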